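(* Let Assumptions (A) hold, $\ell>0$, $T>0$, $a\in\mathbb R_+$, and let $S$ be the solution of $\frac{d}{dt}S=A_\ell(S)$ with some $S(0)\in\mathbb R_+$. For $(x_0,\eta)\in\mathcal H^s\times C([0,T];\mathcal H^s)$ let $x=\mathcal J_1(x_0,\eta)$ be the solution of $x(t)=x_0+\int_0^tF(x(v))D_\ell(S(v))\,dv+\eta(t)$, and for $(\mathfrak S_0,w)\in\mathbb R_+\times C([0,T];\mathbb R)$ let $\mathfrak S=\mathcal J_2(\mathfrak S_0,w)$ be the solution of $\mathfrak S(t)=\mathfrak S_0+\int_0^t\tilde A_\ell(\mathfrak S(v))\,dv+a\,w(t)$. Then $\mathcal J_1:\mathcal H^s\times C([0,T];\mathcal H^s)\to C([0,T];\mathcal H^s)$ and $\mathcal J_2:\mathbb R_+\times C([0,T];\mathbb R)\to C([0,T];\mathbb R)$ are continuous (path spaces with the uniform topology).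
   Context: $\mathcal H$, $\mathcal C$, $\phi_j$, $\lambda_j^2$, $\mathcal H^r$ with $\|x\|_r^2=\sum_jj^{2r}\langle x,\phi_j\rangle^2$ as usual, $(\mathcal H^s)^*\cong\mathcal H^{-s}$; $F(z)=-z-\mathcal C\nabla\Psi(z)$. Assumptions (A): (1) $\lambda_j\asymp j^{-\kappa}$, $\kappa>1/2$; (2) $\Psi:\mathcal H^s\to\mathbb R$ defined everywhere, $s\in[0,\kappa-1/2)$; (3) $0\le\Psi(x)\lesssim1+\|x\|_s^2$; (4) $\|\nabla\Psi(x)\|_{-s}\lesssim1+\|x\|_s$, $\|\partial^2\Psi(x)\|_{\mathcal L(\mathcal H^s,\mathcal H^{-s})}\lesssim1$. With $\Phi$ the standard normal cdf: for $x>0$, $D_\ell(x)=2\ell^2e^{\ell^2(x-1)}\Phi(\ell(1-2x)/\sqrt{2x})$, $\Gamma_\ell(x)=D_\ell(x)+2\ell^2\Phi(-\ell/\sqrt{2x})$, $A_\ell(x)=-2xD_\ell(x)+\Gamma_\ell(x)$; at $0$ all equal $2\ell^2e^{-\ell^2}$. $\tilde A_\ell:\mathbb R\to\mathbb R$ is an extension of $A_\ell$ to the negative half-line: $\tilde A_\ell=A_\ell$ on $[0,\infty)$, $\tilde A_\ell=1$ on $(-\infty,-1/2]$, and on $(-1/2,0)$ it smoothly interpolates between these values, being strictly positive for all $x<1$ and satisfying $|\tilde A_\ell(x)-\tilde A_\ell(y)|\lesssim(1+|x|)|x-y|$. *)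

(* Defs.v *)
From Stdlib Require Import Reals.
From Coquelicot Require Import Coquelicot.
Open Scope R_scope.

(* Elements of H are represented by their coordinates <x, phi_j> in the
   orthonormal eigenbasis (phi_j) of C; index j : nat stands for the
   paper's index j+1 (paper indexes from 1). *)
Definition seqR := nat -> R.

Definition sadd (x y : seqR) : seqR := fun j => x j + y j.
Definition ssub (x y : seqR) : seqR := fun j => x j - y j.

Definition wt (r : R) (j : nat) : R := Rpower (INR j + 1) (2 * r).

Definition in_H (r : R) (x : seqR) : Prop :=
  ex_series (fun j => wt r j * (x j) ^ 2).

Definition normH (r : R) (x : seqR) : R :=
  sqrt (Series (fun j => wt r j * (x j) ^ 2)).

(* duality pairing H^{-s} x H^s  (realises (H^s)^* = H^{-s}) *)
Definition pairing (g h : seqR) : R := Series (fun j => g j * h j).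

Definition Cop (lam : seqR) (y : seqR) : seqR := fun j => (lam j) ^ 2 * y j.

Definition Fmap (lam : seqR) (gradPsi : seqR -> seqR) (z : seqR) : seqR :=
  fun j => - z j - Cop lam (gradPsi z) j.

Definition Phi (x : R) : R :=
  RInt_gen (fun u => exp (- u ^ 2 / 2) / sqrt (2 * PI))
           (Rbar_locally m_infty) (at_point x).

(* D_l, Gamma_l, A_l on [0, oo); at x <= 0 the common value 2 l^2 e^{-l^2}
   (only the value at 0 is ever used). *)
Definition Dl (l x : R) : R :=
  if Rlt_dec 0 x
  then 2 * l ^ 2 * exp (l ^ 2 * (x - 1)) * Phi (l * (1 - 2 * x) / sqrt (2 * x))
  else 2 * l ^ 2 * exp (- l ^ 2).

Definition Gammal (l x : R) : R :=
  if Rlt_dec 0 x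
  then Dl l x + 2 * l ^ 2 * Phi (- l / sqrt (2 * x))
  else 2 * l ^ 2 * exp (- l ^ 2).

Definition Al (l x : R) : R :=
  if Rlt_dec 0 x
  then - 2 * x * Dl l x + Gammal l x
  else 2 * l ^ 2 * exp (- l ^ 2).

Definition path_H (r T : R) (p : R -> seqR) : Prop :=
  (forall t, 0 <= t <= T -> in_H r (p t)) /\
  (forall t, 0 <= t <= T -> forall eps, 0 < eps -> exists del, 0 < del /\
     forall t', 0 <= t' <= T -> Rabs (t' - t) < del ->
       normH r (ssub (p t') (p t)) < eps).

Definition path_R (T : R) (w : R -> R) : Prop :=
  forall t, 0 <= t <= T -> forall eps, 0 < eps -> exists del, 0 < del /\
     forall t', 0 <= t' <= T -> Rabs (t' - t) < del -> Rabs (w t' - w t) < eps.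

(* x = J1(x0, eta): x in C([0,T];H^s) and
   x(t) = x0 + int_0^t F(x(v)) D_l(S(v)) dv + eta(t), written coordinatewise
   (coordinates of the H^s-valued integral of a continuous integrand). *)
Definition is_sol1 (s : R) (lam : seqR) (gradPsi : seqR -> seqR) (l : R)
  (S : R -> R) (T : R) (x0 : seqR) (eta : R -> seqR) (x : R -> seqR) : Prop :=
  path_H s T x /\
  forall t, 0 <= t <= T -> forall j : nat,
    is_RInt (fun v => Fmap lam gradPsi (x v) j * Dl l (S v)) 0 t
            (x t j - x0 j - eta t j).

Definition is_sol2 (At : R -> R) (a T : R) (S0 : R) (w : R -> R)
  (Sg : R -> R) : Prop :=
  path_R T Sg /\
  forall t, 0 <= t <= T ->
    is_RInt (fun v => At (Sg v)) 0 t (Sg t - S0 - a * w t).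

(* Main.v *)
Require Import Defs.
From Stdlib Require Import Reals Lra Lia Psatz Arith ProofIrrelevance FunctionalExtensionality PropExtensionality Classical ClassicalEpsilon.
From Coquelicot Require Import Coquelicot.
Open Scope R_scope.

Lemma series_cv (a : nat -> R) : ex_series a -> Un_cv (fun N => sum_f_R0 a N) (Series a).
Proof.
  intros H. apply is_series_Reals. now apply Series_correct.
Qed.

Lemma nn_partial_le (a : nat -> R) N : (forall n, 0 <= a n) -> ex_series a ->
  sum_f_R0 a N <= Series a.
Proof. intros Hp He. apply sum_incr; auto. now apply series_cv. Qed.

Lemma sum_nn (a : nat -> R) N : (forall n, 0 <= a n) -> 0 <= sum_f_R0 a N.
Proof. intros H; induction N; simpl; auto. specialize (H (S N)); lra. Qed.

Lemma nn_series_nonneg (a : nat -> R) : (forall n, 0 <= a n) -> 0 <= Series a.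
Proof.
  intros Hp. unfold Series.
  assert (H := Lim_seq_le_loc (fun _ => 0) (sum_n a)).
  rewrite Lim_seq_const in H.
  assert (H' : Rbar_le 0 (Lim_seq (sum_n a))).
  { apply H. exists O. intros n _. rewrite sum_n_Reals. now apply sum_nn. }
  destruct (Lim_seq (sum_n a)); simpl in *; lra.
Qed.

Lemma nn_bounded (a : nat -> R) M : (forall n, 0 <= a n) ->
  (forall N, sum_f_R0 a N <= M) -> ex_series a /\ Series a <= M.
Proof.
  intros Hp Hb.
  assert (Hg : Un_growing (fun N => sum_f_R0 a N)).
  { intros n. simpl. specialize (Hp (S n)). lra. }
  destruct (growing_cv _ Hg) as [l Hl].
  { exists M. intros x [N ->]. auto. }
  assert (He : ex_series a).
  { exists l. apply is_series_Reals. exact Hl. }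
  split; auto.
  assert (Series a = l) by (apply (UL_sequence _ _ _ (series_cv a He) Hl)).
  rewrite H. destruct (Rle_lt_dec l M) as [|Hlt]; auto.
  destruct (Hl (l - M)) as [N HN]; [lra|].
  specialize (HN N (le_n N)). specialize (Hb N). unfold R_dist in HN.
  apply Rabs_def2 in HN. lra.
Qed.

Lemma nn_term_le (a : nat -> R) n : (forall n, 0 <= a n) -> ex_series a -> a n <= Series a.
Proof.
  intros Hp He. apply Rle_trans with (sum_f_R0 a n).
  - destruct n as [|m]. simpl; lra. simpl. generalize (sum_nn a m Hp); lra.
  - now apply nn_partial_le.
Qed.

Lemma nn_series_zero (a : nat -> R) n : (forall n, 0 <= a n) -> ex_series a -> Series a = 0 -> a n = 0.
Proof. intros Hp He H0. generalize (nn_term_le a n Hp He) (Hp n); lra. Qed.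

Lemma Series_le_gen (a b : nat -> R) : (forall n, 0 <= a n <= b n) -> ex_series b ->
  ex_series a /\ Series a <= Series b.
Proof.
  intros H Hb. apply nn_bounded. intros; apply H.
  intros N. apply Rle_trans with (sum_f_R0 b N).
  - apply sum_Rle. intros; apply H.
  - apply nn_partial_le; auto. intros n; generalize (H n); lra.
Qed.

Lemma exs_scal (c : R) (a : nat -> R) : ex_series a -> ex_series (fun n => c * a n).
Proof. intros H. apply (ex_series_scal_l c a H). Qed.
Lemma exs_plus (a b : nat -> R) : ex_series a -> ex_series b -> ex_series (fun n => a n + b n).
Proof. intros Ha Hb. apply (ex_series_plus a b Ha Hb). Qed.
Lemma exs_ext (a b : nat -> R) : (forall n, a n = b n) -> ex_series a -> ex_series b.
Proof. intros H Ha. apply (ex_series_ext a b H Ha). Qed.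

Lemma wt_pos r j : 0 < wt r j.
Proof. unfold wt, Rpower. apply exp_pos. Qed.

Definition sq (r : R) (x : seqR) : nat -> R := fun j => wt r j * (x j) ^ 2.

Lemma sq_nn r x j : 0 <= sq r x j.
Proof. unfold sq. generalize (wt_pos r j); intro; apply Rmult_le_pos; [lra| apply pow2_ge_0]. Qed.

Lemma normH_nn r x : 0 <= normH r x.
Proof. apply sqrt_pos. Qed.

Lemma normH_sq r x : normH r x ^ 2 = Series (sq r x).
Proof. unfold normH. rewrite <- Rsqr_pow2. apply Rsqr_sqrt. apply nn_series_nonneg, sq_nn. Qed.

Definition szero : seqR := fun _ => 0.
Definition sscal (c : R) (x : seqR) : seqR := fun j => c * x j.
Definition sopp (x : seqR) : seqR := fun j => - x j.

Lemma in_H_zero r : in_H r szero.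
Proof.
  unfold in_H, szero. apply exs_ext with (a := fun _ => 0).
  { intros; simpl; ring. }
  exists 0. apply is_series_Reals. intros e He. exists O. intros n _.
  unfold R_dist. rewrite sum_cte. simpl. rewrite Rmult_0_l, Rminus_0_r, Rabs_R0. lra.
Qed.

Lemma in_H_scal r c x : in_H r x -> in_H r (sscal c x).
Proof.
  intros H. unfold in_H, sscal.
  apply exs_ext with (a := fun j => c ^ 2 * (wt r j * x j ^ 2)).
  { intros; simpl; ring. }
  now apply (exs_scal (c ^ 2)).
Qed.

Lemma normH_scal r c x : normH r (sscal c x) = Rabs c * normH r x.
Proof.
  unfold normH, sscal.
  rewrite Series_ext with (b := fun j => c ^ 2 * (wt r j * x j ^ 2)) by (intros; ring).
  rewrite Series_scal_l. rewrite sqrt_mult_alt. 2: apply pow2_ge_0.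
  rewrite <- Rsqr_pow2, sqrt_Rsqr_abs. auto.
Qed.

Lemma in_H_add r x y : in_H r x -> in_H r y -> in_H r (sadd x y).
Proof.
  intros Hx Hy. unfold in_H.
  refine (proj1 (Series_le_gen _ (fun j => 2 * (wt r j * x j ^ 2) + 2 * (wt r j * y j ^ 2)) _ _)).
  - intros j. split. apply (sq_nn r _ j). unfold sadd. generalize (wt_pos r j); intro Hw.
    assert (H2 : (x j + y j) ^ 2 <= 2 * x j ^ 2 + 2 * y j ^ 2).
    { generalize (pow2_ge_0 (x j - y j)). intros. simpl in *. nra. }
    apply Rmult_le_compat_l with (r := wt r j) in H2; lra.
  - apply (exs_plus (fun j => 2 * (wt r j * x j ^ 2)) (fun j => 2 * (wt r j * y j ^ 2))).
    now apply (exs_scal 2). now apply (exs_scal 2).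
Qed.

Lemma in_H_opp r x : in_H r x -> in_H r (sopp x).
Proof.
  intros H. unfold in_H, sopp. eapply exs_ext; [|exact H]. intros; simpl; ring.
Qed.

Lemma in_H_sub r x y : in_H r x -> in_H r y -> in_H r (ssub x y).
Proof.
  intros Hx Hy. replace (ssub x y) with (sadd x (sopp y)).
  apply in_H_add; auto; apply in_H_opp; auto.
  apply functional_extensionality; intros j; unfold ssub, sadd, sopp; ring.
Qed.

Lemma sqrt_help A B Q : 0 <= A -> 0 <= B ->
  (forall l, 0 < l -> Q <= (1 + l) * A + (1 + / l) * B) -> sqrt Q <= sqrt A + sqrt B.
Proof.
  intros HA HB H.
  assert (HQ : Q <= (sqrt A + sqrt B) ^ 2).
  { destruct (Req_dec A 0) as [A0|A0].
    - subst A. rewrite sqrt_0, Rplus_0_l, <- Rsqr_pow2, Rsqr_sqrt by lra.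
      destruct (Rle_lt_dec Q B) as [|HQB]; auto.
      destruct (Req_dec B 0) as [B0|B0].
      + subst. specialize (H 1 Rlt_0_1). lra.
      + set (l := 2 * B / (Q - B)).
        assert (Hl : 0 < l) by (unfold l; apply Rdiv_lt_0_compat; lra).
        specialize (H l Hl). unfold l in H. rewrite Rinv_div in H.
        assert (B * ((Q - B) / (2 * B)) = (Q - B) / 2) by (field; lra). nra.
    - destruct (Req_dec B 0) as [B0|B0].
      + subst B. rewrite sqrt_0, Rplus_0_r, <- Rsqr_pow2, Rsqr_sqrt by lra.
        destruct (Rle_lt_dec Q A) as [|HQA]; auto.
        set (l := (Q - A) / (2 * A)).
        assert (Hl : 0 < l) by (unfold l; apply Rdiv_lt_0_compat; lra).
        specialize (H l Hl). unfold l in H.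
        assert ((Q - A) / (2 * A) * A = (Q - A) / 2) by (field; lra). nra.
      + assert (sA : 0 < sqrt A) by (apply sqrt_lt_R0; lra).
        assert (sB : 0 < sqrt B) by (apply sqrt_lt_R0; lra).
        specialize (H (sqrt B / sqrt A) (Rdiv_lt_0_compat _ _ sB sA)).
        replace ((sqrt A + sqrt B) ^ 2) with ((1 + sqrt B / sqrt A) * A + (1 + / (sqrt B / sqrt A)) * B); auto.
        pose proof (sqrt_sqrt A HA) as EA. pose proof (sqrt_sqrt B HB) as EB.
        set (a := sqrt A) in *. set (b := sqrt B) in *. clearbody a b.
        rewrite <- EA, <- EB. field. split; lra. }
  rewrite <- (sqrt_pow2 (sqrt A + sqrt B)).
  2: generalize (sqrt_pos A) (sqrt_pos B); lra.
  destruct (Rle_lt_dec 0 Q). apply sqrt_le_1; auto. apply pow2_ge_0.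
  rewrite sqrt_neg_0 by lra. apply sqrt_pos.
Qed.

Lemma normH_triangle r x y : in_H r x -> in_H r y ->
  normH r (sadd x y) <= normH r x + normH r y.
Proof.
  intros Hx Hy. unfold normH. apply sqrt_help; try (apply nn_series_nonneg, sq_nn).
  intros l Hl.
  rewrite <- Series_scal_l, <- Series_scal_l, <- Series_plus.
  2: apply (exs_scal (1 + l)); exact Hx.
  2: apply (exs_scal (1 + / l)); exact Hy.
  apply Series_le_gen.
  - intros j. split. apply (sq_nn r _ j). unfold sadd. generalize (wt_pos r j); intro Hw.
    assert (Hi : 0 < / l) by (apply Rinv_0_lt_compat; lra).
    assert (2 * x j * y j <= l * x j ^ 2 + / l * y j ^ 2).
    { assert (0 <= (l * x j - y j) ^ 2 * / l) by (apply Rmult_le_pos; [apply pow2_ge_0|lra]).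
      replace ((l * x j - y j) ^ 2 * / l) with (l * x j ^ 2 - 2 * x j * y j + / l * y j ^ 2) in H by (field; lra).
      lra. }
    nra.
  - apply exs_plus. apply (exs_scal (1 + l)); exact Hx.
    apply (exs_scal (1 + / l)); exact Hy.
Qed.

Lemma normH_coord r x j : in_H r x -> wt r j * (x j) ^ 2 <= normH r x ^ 2.
Proof. intros H. rewrite normH_sq. apply (nn_term_le (sq r x)); auto. apply sq_nn. Qed.

Lemma normH_zero r x : in_H r x -> normH r x = 0 -> forall j, x j = 0.
Proof.
  intros H H0 j. generalize (normH_coord r x j H). rewrite H0.
  generalize (wt_pos r j); intros. simpl in H1. 
  assert (x j ^ 2 = 0) by nra. simpl in H2. nra.
Qed.
Definition trunc (N : nat) (x : seqR) : seqR := fun j => if le_lt_dec j N then x j else 0.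

Lemma sum_trunc_le r N x n : (n <= N)%nat -> sum_f_R0 (sq r (trunc N x)) n = sum_f_R0 (sq r x) n.
Proof.
  intros H. apply sum_eq. intros i Hi. unfold sq, trunc.
  destruct (le_lt_dec i N); auto; lia.
Qed.

Lemma sum_trunc_ge r N x n : (N <= n)%nat -> sum_f_R0 (sq r (trunc N x)) n = sum_f_R0 (sq r x) N.
Proof.
  intros H. induction H.
  - now apply sum_trunc_le.
  - simpl. rewrite IHle. unfold sq, trunc. destruct (le_lt_dec (S m) N); [lia|]. simpl; ring.
Qed.

Lemma trunc_in_H r N x : in_H r (trunc N x) /\ normH r (trunc N x) ^ 2 = sum_f_R0 (sq r x) N.
Proof.
  assert (Hc : Un_cv (fun n => sum_f_R0 (sq r (trunc N x)) n) (sum_f_R0 (sq r x) N)).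
  { intros e He. exists N. intros n Hn. rewrite sum_trunc_ge by lia. unfold R_dist.
    rewrite Rminus_diag, Rabs_R0; lra. }
  assert (He : in_H r (trunc N x)).
  { exists (sum_f_R0 (sq r x) N). apply is_series_Reals. exact Hc. }
  split; auto. rewrite normH_sq. apply (UL_sequence _ _ _ (series_cv _ He) Hc).
Qed.

Lemma trunc_ssub N x y : trunc N (ssub x y) = ssub (trunc N x) (trunc N y).
Proof.
  apply functional_extensionality; intros j; unfold trunc, ssub. destruct (le_lt_dec j N); ring.
Qed.

Lemma sq_le_nn a b : 0 <= a -> 0 <= b -> a ^ 2 <= b ^ 2 -> a <= b.
Proof. intros. simpl in *. nra. Qed.

Lemma trunc_le r N x : in_H r x -> normH r (trunc N x) <= normH r x.
Proof.
  intros H. destruct (trunc_in_H r N x) as [H1 H2].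
  apply sq_le_nn; try apply normH_nn. rewrite H2, normH_sq.
  apply nn_partial_le; auto. apply sq_nn.
Qed.

Lemma normH_bound_trunc r x M : 0 <= M -> (forall N, normH r (trunc N x) <= M) ->
  in_H r x /\ normH r x <= M.
Proof.
  intros HM H.
  assert (Hb : forall N, sum_f_R0 (sq r x) N <= M ^ 2).
  { intros N. destruct (trunc_in_H r N x) as [_ E]. rewrite <- E.
    specialize (H N). generalize (normH_nn r (trunc N x)). intros. simpl. nra. }
  destruct (nn_bounded (sq r x) (M ^ 2) (sq_nn r x) Hb) as [He Hs].
  split; auto. apply sq_le_nn; auto. apply normH_nn. rewrite normH_sq. auto.
Qed.

Lemma ssub_in r x y : in_H r x -> in_H r y -> in_H r (ssub x y). 
Proof. apply in_H_sub. Qed.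

Lemma normH_ssub_sym r x y : normH r (ssub x y) = normH r (ssub y x).
Proof.
  replace (ssub x y) with (sscal (-1) (ssub y x)).
  rewrite normH_scal. replace (Rabs (-1)) with 1. ring. rewrite Rabs_left; lra.
  apply functional_extensionality; intros j; unfold sscal, ssub; ring.
Qed.

Lemma normH_ssub_tri r x y z : in_H r x -> in_H r y -> in_H r z ->
  normH r (ssub x z) <= normH r (ssub x y) + normH r (ssub y z).
Proof.
  intros. replace (ssub x z) with (sadd (ssub x y) (ssub y z)).
  apply normH_triangle; apply in_H_sub; auto.
  apply functional_extensionality; intros j; unfold sadd, ssub; ring.
Qed.

Lemma normH_szero r : normH r szero = 0.
Proof.
  replace szero with (sscal 0 szero). rewrite normH_scal, Rabs_R0; ring.
  apply functional_extensionality; intros j; unfold sscal, szero; ring.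
Qed.

Lemma normH_ssub_self r x : normH r (ssub x x) = 0.
Proof.
  replace (ssub x x) with szero. apply normH_szero.
  apply functional_extensionality; intros j; unfold ssub, szero; ring.
Qed.

Lemma coord_bound r x j : in_H r x -> Rabs (x j) <= normH r x / sqrt (wt r j).
Proof.
  intros H. assert (Hw := wt_pos r j). assert (Hs : 0 < sqrt (wt r j)) by (apply sqrt_lt_R0; lra).
  apply Rmult_le_reg_r with (sqrt (wt r j)); auto.
  unfold Rdiv. rewrite Rmult_assoc, Rinv_l, Rmult_1_r by lra.
  apply sq_le_nn. apply Rmult_le_pos; [apply Rabs_pos|lra]. apply normH_nn.
  rewrite Rpow_mult_distr. rewrite <- Rsqr_pow2 with (x := sqrt _), Rsqr_sqrt by lra.
  rewrite pow2_abs. rewrite Rmult_comm. now apply normH_coord.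
Qed.

Record Hs (r : R) := mkH { hv : seqR ; hp : in_H r hv }.
Arguments mkH {r}. Arguments hv {r}. Arguments hp {r}.

Lemma Hs_eq r (x y : Hs r) : hv x = hv y -> x = y.
Proof.
  destruct x as [x px], y as [y py]; simpl. intros ->. f_equal. apply proof_irrelevance.
Qed.

Definition Hplus r (x y : Hs r) : Hs r := mkH (sadd (hv x) (hv y)) (in_H_add r _ _ (hp x) (hp y)).
Definition Hzero r : Hs r := mkH szero (in_H_zero r).
Definition Hopp r (x : Hs r) : Hs r := mkH (sopp (hv x)) (in_H_opp r _ (hp x)).
Definition Hscal r (c : R) (x : Hs r) : Hs r := mkH (sscal c (hv x)) (in_H_scal r c _ (hp x)).

Lemma Hplus_comm r x y : Hplus r x y = Hplus r y x.
Proof. apply Hs_eq; simpl. apply functional_extensionality; intros j; unfold sadd; ring. Qed.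
Lemma Hplus_assoc r x y z : Hplus r x (Hplus r y z) = Hplus r (Hplus r x y) z.
Proof. apply Hs_eq; simpl. apply functional_extensionality; intros j; unfold sadd; ring. Qed.
Lemma Hplus_zero r x : Hplus r x (Hzero r) = x.
Proof. apply Hs_eq; simpl. apply functional_extensionality; intros j; unfold sadd, szero; ring. Qed.
Lemma Hplus_opp r x : Hplus r x (Hopp r x) = Hzero r.
Proof. apply Hs_eq; simpl. apply functional_extensionality; intros j; unfold sadd, sopp, szero; ring. Qed.

Definition Hs_AM_mixin r := AbelianMonoid.Mixin (Hs r) (Hplus r) (Hzero r) (Hplus_comm r) (Hplus_assoc r) (Hplus_zero r).
Canonical Hs_AM r := AbelianMonoid.Pack (Hs r) (Hs_AM_mixin r) (Hs r).
Definition Hs_AG_mixin r := AbelianGroup.Mixin (Hs_AM r) (Hopp r) (Hplus_opp r).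
Definition Hs_AG_class r := AbelianGroup.Class (Hs r) (Hs_AM_mixin r) (Hs_AG_mixin r).
Canonical Hs_AG r := AbelianGroup.Pack (Hs r) (Hs_AG_class r) (Hs r).

Lemma Hscal_assoc r (a b : R_Ring) (u : Hs_AG r) : Hscal r a (Hscal r b u) = Hscal r (mult a b) u.
Proof. apply Hs_eq; simpl. apply functional_extensionality; intros j; unfold sscal; simpl. unfold mult; simpl; ring. Qed.
Lemma Hscal_one r (u : Hs_AG r) : Hscal r one u = u.
Proof. apply Hs_eq; simpl. apply functional_extensionality; intros j; unfold sscal; simpl. unfold one; simpl; ring. Qed.
Lemma Hscal_distr_l r (a : R_Ring) (u v : Hs_AG r) : Hscal r a (plus u v) = plus (Hscal r a u) (Hscal r a v).
Proof. apply Hs_eq; simpl. apply functional_extensionality; intros j; unfold sscal, sadd; simpl; ring. Qed.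
Lemma Hscal_distr_r r (a b : R_Ring) (u : Hs_AG r) : Hscal r (plus a b) u = plus (Hscal r a u) (Hscal r b u).
Proof. apply Hs_eq; simpl. apply functional_extensionality; intros j; unfold sscal, sadd; simpl. unfold plus; simpl; ring. Qed.

Definition Hs_MS_mixin r := ModuleSpace.Mixin R_Ring (Hs_AG r) (Hscal r) (Hscal_assoc r) (Hscal_one r) (Hscal_distr_l r) (Hscal_distr_r r).
Definition Hs_MS_class r := ModuleSpace.Class R_Ring (Hs r) (Hs_AG_class r) (Hs_MS_mixin r).
Canonical Hs_MS r := ModuleSpace.Pack R_Ring (Hs r) (Hs_MS_class r) (Hs r).

Definition Hball r (x : Hs r) (e : R) (y : Hs r) : Prop := normH r (ssub (hv y) (hv x)) < e.

Lemma Hball_center r x (e : posreal) : Hball r x e x.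
Proof. unfold Hball. rewrite normH_ssub_self. apply cond_pos. Qed.
Lemma Hball_sym r x y e : Hball r x e y -> Hball r y e x.
Proof. unfold Hball. now rewrite normH_ssub_sym. Qed.
Lemma Hball_tri r x y z e1 e2 : Hball r x e1 y -> Hball r y e2 z -> Hball r x (e1 + e2) z.
Proof.
  unfold Hball. intros H1 H2.
  generalize (normH_ssub_tri r (hv z) (hv y) (hv x) (hp z) (hp y) (hp x)). lra.
Qed.

Definition Hs_US_mixin r := UniformSpace.Mixin (Hs r) (Hzero r) (Hball r) (Hball_center r) (Hball_sym r) (Hball_tri r).
Canonical Hs_US r := UniformSpace.Pack (Hs r) (Hs_US_mixin r) (Hs r).
Definition Hs_NMA_class r := NormedModuleAux.Class R_AbsRing (Hs r) (Hs_MS_class r) (Hs_US_mixin r).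
Canonical Hs_NMA r := NormedModuleAux.Pack R_AbsRing (Hs r) (Hs_NMA_class r) (Hs r).

Definition Hnorm r (x : Hs r) : R := normH r (hv x).

Lemma minus_hv r (x y : Hs_NMA r) : hv (minus y x) = ssub (hv y) (hv x).
Proof. reflexivity. Qed.

Lemma Hnorm_tri r (x y : Hs_NMA r) : Hnorm r (plus x y) <= Hnorm r x + Hnorm r y.
Proof. unfold Hnorm. simpl. apply normH_triangle; apply hp. Qed.
Lemma Hnorm_scal r (l : R_AbsRing) (x : Hs_NMA r) : Hnorm r (scal l x) <= abs l * Hnorm r x.
Proof. unfold Hnorm. simpl. rewrite normH_scal. unfold abs; simpl. lra. Qed.
Lemma Hnorm_ball1 r (x y : Hs_NMA r) (eps : R) : Hnorm r (minus y x) < eps -> ball x eps y.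
Proof. unfold Hnorm. rewrite minus_hv. auto. Qed.
Lemma Hnorm_ball2 r (x y : Hs_NMA r) (eps : posreal) : ball x eps y -> Hnorm r (minus y x) < 1 * eps.
Proof. unfold Hnorm. rewrite minus_hv, Rmult_1_l. auto. Qed.
Lemma Hnorm_eq0 r (x : Hs_NMA r) : Hnorm r x = 0 -> x = zero.
Proof.
  unfold Hnorm. intros H. apply Hs_eq. simpl. apply functional_extensionality. intros j.
  unfold szero. exact (normH_zero r _ (hp x) H j).
Qed.

Definition Hs_NM_mixin r := NormedModule.Mixin R_AbsRing (Hs_NMA r) (Hnorm r) 1 (Hnorm_tri r) (Hnorm_scal r) (Hnorm_ball1 r) (Hnorm_ball2 r) (Hnorm_eq0 r).
Definition Hs_NM_class r := NormedModule.Class R_AbsRing (Hs r) (Hs_NMA_class r) (Hs_NM_mixin r).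
Canonical Hs_NM r := NormedModule.Pack R_AbsRing (Hs r) (Hs_NM_class r) (Hs r).

Definition Hlimv r (F : (Hs r -> Prop) -> Prop) : seqR :=
  fun j => lim (T := R_CompleteSpace) (filtermap (fun x : Hs r => hv x j) F).

Definition Hlim r (F : (Hs_US r -> Prop) -> Prop) : Hs_US r :=
  match excluded_middle_informative (in_H r (Hlimv r F)) with
  | left p => mkH (Hlimv r F) p
  | right _ => Hzero r
  end.

Lemma coord_filter r (F : (Hs_US r -> Prop) -> Prop) j :
  ProperFilter F -> cauchy F -> forall d : posreal,
  F (fun y : Hs r => Rabs (hv y j - Hlimv r F j) < d).
Proof.
  intros HF HC d.
  assert (Hw := wt_pos r j). assert (Hsw : 0 < sqrt (wt r j)) by (apply sqrt_lt_R0; lra).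
  assert (HC' : cauchy (T := R_UniformSpace) (filtermap (fun x : Hs r => hv x j) F)).
  { intros e. assert (He : 0 < e * sqrt (wt r j)) by (apply Rmult_lt_0_compat; [apply cond_pos|exact Hsw]).
    destruct (HC (mkposreal _ He)) as [x Hx]. exists (hv x j).
    unfold filtermap. eapply filter_imp; [|exact Hx]. intros y Hy.
    change (Rabs (hv y j - hv x j) < e).
    assert (E : hv y j - hv x j = ssub (hv y) (hv x) j) by reflexivity. rewrite E.
    eapply Rle_lt_trans. apply coord_bound. apply in_H_sub; apply hp.
    apply Rmult_lt_reg_r with (sqrt (wt r j)); [exact Hsw|]. unfold Rdiv. rewrite Rmult_assoc, Rinv_l, Rmult_1_r by lra.
    exact Hy. }
  generalize (complete_cauchy (T := R_CompleteSpace) _ (filtermap_proper_filter _ _ _ _ HF) HC' d).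
  unfold filtermap. apply filter_imp. intros y Hy.
  change (Rabs (hv y j - Hlimv r F j) < d) . exact Hy.
Qed.

Lemma coord_filter_fin r (F : (Hs_US r -> Prop) -> Prop) N :
  ProperFilter F -> cauchy F -> forall d : posreal,
  F (fun y : Hs r => forall j, (j <= N)%nat -> Rabs (hv y j - Hlimv r F j) < d).
Proof.
  intros HF HC d. induction N.
  - eapply filter_imp; [|apply (coord_filter r F 0 HF HC d)]. intros y Hy j Hj.
    replace j with 0%nat by lia. auto.
  - eapply filter_imp; [|apply (filter_and _ _ IHN (coord_filter r F (S N) HF HC d))].
    intros y [H1 H2] j Hj. destruct (Nat.eq_dec j (S N)). subst; auto. apply H1; lia.
Qed.

Lemma sum_wt_nn r N : 0 <= sum_f_R0 (wt r) N.
Proof. apply sum_nn. intros; left; apply wt_pos. Qed.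

Lemma trunc_small r N z d : 0 <= d -> (forall j, (j <= N)%nat -> Rabs (z j) <= d) ->
  normH r (trunc N z) <= d * sqrt (sum_f_R0 (wt r) N).
Proof.
  intros Hd H. apply sq_le_nn. apply normH_nn. apply Rmult_le_pos; auto; apply sqrt_pos.
  rewrite (proj2 (trunc_in_H r N z)). rewrite Rpow_mult_distr.
  rewrite <- Rsqr_pow2 with (x := sqrt _), Rsqr_sqrt by apply sum_wt_nn.
  rewrite scal_sum. apply sum_Rle. intros j Hj. unfold sq.
  rewrite (Rmult_comm (wt r j) (d ^ 2)). rewrite (Rmult_comm (wt r j)).
  apply Rmult_le_compat_r. left; apply wt_pos.
  rewrite <- pow2_abs. specialize (H j Hj). generalize (Rabs_pos (z j)). intros. simpl; nra.
Qed.

Lemma Hlim_key r (F : (Hs_US r -> Prop) -> Prop) (x0 : Hs r) (e : R) :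
  ProperFilter F -> cauchy F -> 0 < e -> F (Hball r x0 e) ->
  forall N, normH r (trunc N (ssub (Hlimv r F) (hv x0))) <= e.
Proof.
  intros HF HC He Hx N.
  set (W := sqrt (sum_f_R0 (wt r) N)).
  assert (HW : 0 <= W) by apply sqrt_pos.
  apply Rnot_lt_le. intros Hlt.
  set (X := normH r (trunc N (ssub (Hlimv r F) (hv x0)))) in *.
  assert (Hd : 0 < (X - e) / (2 * (W + 1))) by (apply Rdiv_lt_0_compat; lra).
  set (d := mkposreal _ Hd).
  destruct (filter_ex _ (filter_and _ _ Hx (coord_filter_fin r F N HF HC d))) as [y [Hy1 Hy2]].
  assert (E : trunc N (ssub (Hlimv r F) (hv x0)) = sadd (trunc N (ssub (Hlimv r F) (hv y))) (trunc N (ssub (hv y) (hv x0)))).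
  { apply functional_extensionality; intros j; unfold trunc, ssub, sadd. destruct (le_lt_dec j N); ring. }
  assert (T1 : X <= normH r (trunc N (ssub (Hlimv r F) (hv y))) + normH r (trunc N (ssub (hv y) (hv x0)))).
  { unfold X. rewrite E. apply normH_triangle; apply trunc_in_H. }
  assert (T2 : normH r (trunc N (ssub (Hlimv r F) (hv y))) <= d * W).
  { apply trunc_small. left; apply cond_pos. intros j Hj. unfold ssub. rewrite <- Rabs_Ropp.
    replace (- (Hlimv r F j - hv y j)) with (hv y j - Hlimv r F j) by ring. left; auto. }
  assert (T3 : normH r (trunc N (ssub (hv y) (hv x0))) < e).
  { eapply Rle_lt_trans. apply trunc_le. apply in_H_sub; apply hp. exact Hy1. }
  simpl in T2.
  assert ((X - e) / (2 * (W + 1)) * W <= (X - e) / 2).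
  { unfold Rdiv. rewrite Rinv_mult. 
    assert (0 < / (W + 1)) by (apply Rinv_0_lt_compat; lra).
    assert (W * / (W + 1) <= 1). { apply Rmult_le_reg_r with (W + 1). lra. rewrite Rmult_assoc, Rinv_l by lra. lra. }
    assert (0 <= (X - e) * / 2) by lra. nra. }
  lra.
Qed.

Lemma Hlim_ok r (F : (Hs_US r -> Prop) -> Prop) (x0 : Hs r) (e : R) :
  ProperFilter F -> cauchy F -> 0 < e -> F (Hball r x0 e) ->
  in_H r (Hlimv r F) /\ normH r (ssub (Hlimv r F) (hv x0)) <= e.
Proof.
  intros HF HC He Hx.
  assert (Hin : in_H r (Hlimv r F)).
  { refine (proj1 (normH_bound_trunc r _ (e + normH r (hv x0)) ltac:(generalize (normH_nn r (hv x0)); lra) _)).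
    intros N. replace (trunc N (Hlimv r F)) with (sadd (trunc N (ssub (Hlimv r F) (hv x0))) (trunc N (hv x0))).
    eapply Rle_trans. apply normH_triangle; apply trunc_in_H.
    apply Rplus_le_compat. eapply Hlim_key; eauto. apply trunc_le, hp.
    apply functional_extensionality; intros j; unfold trunc, ssub, sadd. destruct (le_lt_dec j N); ring. }
  split; auto. refine (proj2 (normH_bound_trunc r _ e (Rlt_le _ _ He) _)).
  intros N. eapply Hlim_key; eauto.
Qed.

Lemma Hlim_ax1 r (F : (Hs_US r -> Prop) -> Prop) : ProperFilter F -> cauchy F ->
  forall eps : posreal, F (ball (Hlim r F) eps).
Proof.
  intros HF HC eps.
  assert (He : 0 < eps / 2) by (generalize (cond_pos eps); lra).
  destruct (HC (mkposreal _ He)) as [x0 Hx0].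
  destruct (Hlim_ok r F x0 (eps / 2) HF HC He Hx0) as [Hin Hle].
  unfold Hlim. destruct (excluded_middle_informative (in_H r (Hlimv r F))) as [p|]; [|contradiction].
  eapply filter_imp; [|exact Hx0]. intros y Hy.
  change (normH r (ssub (hv y) (Hlimv r F)) < eps).
  eapply Rle_lt_trans. apply (normH_ssub_tri r _ (hv x0)); try apply hp; auto.
  rewrite (normH_ssub_sym r (hv x0)). change (normH r (ssub (hv y) (hv x0)) < eps / 2) in Hy. lra.
Qed.

Lemma Hlim_ax2 r (F1 F2 : (Hs_US r -> Prop) -> Prop) : filter_le F1 F2 -> filter_le F2 F1 ->
  close (Hlim r F1) (Hlim r F2).
Proof.
  intros H1 H2. assert (F1 = F2).
  { apply functional_extensionality; intros P. apply propositional_extensionality; split; auto. }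
  subst. intros eps. apply ball_center.
Qed.

Definition Hs_CS_mixin r := CompleteSpace.Mixin (Hs_US r) (Hlim r) (Hlim_ax1 r) (Hlim_ax2 r).
Definition Hs_CNM_class r := CompleteNormedModule.Class R_AbsRing (Hs r) (Hs_NM_class r) (Hs_CS_mixin r).
Canonical Hs_CNM r := CompleteNormedModule.Pack R_AbsRing (Hs r) (Hs_CNM_class r) (Hs r).
Canonical Hs_CS r := CompleteSpace.Pack (Hs r) (CompleteSpace.Class _ (Hs_US_mixin r) (Hs_CS_mixin r)) (Hs r).

Lemma minus_plus_l {G : AbelianGroup} (a b : G) : minus (plus a b) a = b.
Proof. unfold minus. rewrite (plus_comm a b), <- plus_assoc. transitivity (plus b zero). f_equal; apply plus_opp_r. apply plus_zero_r. Qed.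

Definition clamp (T t : R) : R := Rmax 0 (Rmin t T).

Lemma clamp_in T t : 0 <= T -> 0 <= clamp T t <= T.
Proof. intros. unfold clamp, Rmax, Rmin. repeat destruct Rle_dec; lra. Qed.
Lemma clamp_id T t : 0 <= t <= T -> clamp T t = t.
Proof. intros. unfold clamp, Rmax, Rmin. repeat destruct Rle_dec; lra. Qed.
Lemma clamp_lip T t t' : 0 <= T -> Rabs (clamp T t - clamp T t') <= Rabs (t - t').
Proof.
  intros. unfold clamp, Rmax, Rmin. repeat destruct Rle_dec;
  repeat (rewrite Rabs_left1 by lra || rewrite Rabs_pos_eq by lra); try lra;
  unfold Rabs; repeat destruct Rcase_abs; lra.
Qed.

Definition contE {E : NormedModule R_AbsRing} (T : R) (f : R -> E) : Prop :=
  forall t, 0 <= t <= T -> forall eps, 0 < eps -> exists del, 0 < del /\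
    forall t', 0 <= t' <= T -> Rabs (t' - t) < del -> norm (minus (f t') (f t)) < eps.

Lemma cont_clamp {E : NormedModule R_AbsRing} T (f : R -> E) : 0 <= T -> contE T f ->
  forall t, continuous (fun v => f (clamp T v)) t.
Proof.
  intros HT Hf t. unfold continuous. apply filterlim_locally. intros eps.
  destruct (Hf (clamp T t) (clamp_in T t HT) eps (cond_pos eps)) as [d [Hd Hd']].
  exists (mkposreal d Hd). intros v Hv. apply norm_compat1. apply Hd'.
  apply clamp_in; auto. eapply Rle_lt_trans. apply clamp_lip; auto. exact Hv.
Qed.

Lemma cont_bound {E : NormedModule R_AbsRing} T (f : R -> E) : 0 <= T -> contE T f ->
  exists M, 0 <= M /\ forall t, norm (f (clamp T t)) <= M.
Proof.
  intros HT Hf.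
  destruct (continuity_ab_maj (fun t => norm (f (clamp T t))) 0 T HT) as [m [Hm _]].
  { intros c _. apply continuity_pt_filterlim.
    apply (filterlim_comp _ _ _ (fun v => f (clamp T v)) norm _ (locally (f (clamp T c)))).
    apply cont_clamp; auto. apply filterlim_norm. }
  exists (norm (f (clamp T m))). split. apply norm_ge_0.
  intros t. rewrite <- (clamp_id T (clamp T t)) by (apply clamp_in; auto).
  apply Hm. apply clamp_in; auto.
Qed.

Lemma ex_RInt_clamp {E : CompleteNormedModule R_AbsRing} T (f : R -> E) a b : 0 <= T -> contE T f ->
  ex_RInt (fun v => f (clamp T v)) a b.
Proof. intros. apply ex_RInt_continuous. intros; now apply (cont_clamp (E := E) T f). Qed.

Lemma RInt_lip {E : CompleteNormedModule R_AbsRing} (h : R -> E) M a b :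
  (forall z, continuous h z) -> (forall v, norm (h v) <= M) ->
  norm (minus (RInt h 0 b) (RInt h 0 a)) <= M * Rabs (b - a).
Proof.
  intros Hc Hb. assert (Hex : forall x y, ex_RInt h x y) by (intros; apply ex_RInt_continuous; auto).
  rewrite <- (RInt_Chasles h 0 a b) by auto.
  replace (minus (plus (RInt h 0 a) (RInt h a b)) (RInt h 0 a)) with (RInt h a b).
  2:{ symmetry. exact (@minus_plus_l (CompleteNormedModule.AbelianGroup R_AbsRing E) _ _). }
  destruct (Rle_lt_dec a b).
  - rewrite Rabs_pos_eq by lra. rewrite Rmult_comm. eapply norm_RInt_le_const; eauto. apply RInt_correct; auto.
  - rewrite Rabs_left by lra. rewrite <- opp_RInt_swap by auto. rewrite (norm_opp (V := CompleteNormedModule.NormedModule R_AbsRing E)).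
    replace (- (b - a)) with (a - b) by ring. rewrite Rmult_comm.
    eapply norm_RInt_le_const; eauto. lra. apply RInt_correct; auto.
Qed.

Lemma cont_ind (T : R) (f : R -> R) : 0 < T -> contE (E := R_NormedModule) T f ->
  (forall tau, 0 <= tau <= T -> (forall s, 0 <= s < tau -> f s <= 0) -> f tau < 0) ->
  forall t, 0 <= t <= T -> f t <= 0.
Proof.
  intros HT Hc H.
  set (P := fun t => 0 <= t <= T /\ forall s, 0 <= s <= t -> f s <= 0).
  assert (H0 : f 0 < 0) by (apply H; [lra| intros; lra]).
  assert (HP0 : P 0). { split. lra. intros s Hs. replace s with 0 by lra. lra. }
  destruct (completeness P) as [m [Hub Hlub]].
  { exists T. intros t [Ht _]. lra. }
  { exists 0; auto. }
  assert (Hm0 : 0 <= m) by (apply Hub; auto).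
  assert (HmT : m <= T) by (apply Hlub; intros t [Ht _]; lra).
  assert (Hbelow : forall s, 0 <= s < m -> f s <= 0).
  { intros s Hs. destruct (classic (exists t, P t /\ s <= t)) as [[t [[_ Ht] Hst]]|Hn].
    - apply Ht; lra.
    - exfalso. assert (m <= s); [|lra]. apply Hlub. intros t Ht. apply Rnot_lt_le. intros Hlt.
      apply Hn. exists t; split; auto; lra. }
  assert (Hfm : f m < 0) by (apply H; auto).
  destruct (Hc m (conj Hm0 HmT) (- f m) ltac:(lra)) as [d [Hd Hd']].
  assert (Hnear : forall t', 0 <= t' <= T -> Rabs (t' - m) < d -> f t' < 0).
  { intros t' Ht' Hdt. specialize (Hd' t' Ht' Hdt). unfold norm, minus, plus, opp in Hd'; simpl in Hd'.
    unfold abs in Hd'; simpl in Hd'. apply Rabs_def2 in Hd'. lra. }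
  assert (HmE : m = T).
  { destruct (Req_dec m T) as [|Hne]; auto. exfalso.
    set (t1 := Rmin T (m + d / 2)).
    assert (Ht1 : P t1).
    { unfold t1, Rmin; destruct Rle_dec; split; try lra; intros s Hs;
      (destruct (Rlt_le_dec s m); [apply Hbelow; lra| left; apply Hnear; [lra|]]);
      rewrite Rabs_pos_eq; lra. }
    specialize (Hub t1 Ht1). unfold t1, Rmin in Hub; destruct Rle_dec; lra. }
  subst m. intros t Ht. destruct (Rlt_le_dec t T). apply Hbelow; lra. replace t with T by lra. lra.
Qed.

Lemma path_R_contE T f : path_R T f <-> contE (E := R_NormedModule) T f.
Proof. reflexivity. Qed.

Lemma path_R_cont T g : (forall t, continuity_pt g t) -> path_R T g.
Proof.
  intros Hg t _ eps He. destruct (Hg t eps He) as [d [Hd Hd']].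
  exists d. split; auto. intros t' _ Ht'. destruct (Req_dec t' t). subst. rewrite Rminus_diag, Rabs_R0; lra.
  apply Hd'. split. split. exact I. auto. exact Ht'.
Qed.

Lemma path_R_minus T f g : path_R T f -> path_R T g -> path_R T (fun t => f t - g t).
Proof.
  intros Hf Hg t Ht eps He.
  destruct (Hf t Ht (eps/2) ltac:(lra)) as [d1 [Hd1 H1]].
  destruct (Hg t Ht (eps/2) ltac:(lra)) as [d2 [Hd2 H2]].
  exists (Rmin d1 d2). split. apply Rmin_pos; auto.
  intros t' Ht' Hd. specialize (H1 t' Ht' (Rlt_le_trans _ _ _ Hd (Rmin_l _ _))).
  specialize (H2 t' Ht' (Rlt_le_trans _ _ _ Hd (Rmin_r _ _))).
  replace (f t' - g t' - (f t - g t)) with ((f t' - f t) - (g t' - g t)) by ring.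
  eapply Rle_lt_trans. apply Rabs_triang. rewrite Rabs_Ropp. lra.
Qed.

Lemma RInt_exp (c L tau : R) : 0 < L ->
  RInt (fun v => c * exp (L * v)) 0 tau = c / L * (exp (L * tau) - 1).
Proof.
  intros HL. apply is_RInt_unique.
  replace (c / L * (exp (L * tau) - 1)) with (minus (c / L * exp (L * tau)) (c / L * exp (L * 0))).
  2:{ rewrite Rmult_0_r, exp_0. unfold minus, plus, opp; simpl. ring. }
  apply (is_RInt_derive (fun v => c / L * exp (L * v))).
  - intros x _. auto_derive; auto. field. lra.
  - intros x _. apply continuity_pt_filterlim. apply derivable_continuous_pt.
    apply derivable_pt_mult. apply derivable_pt_const.
    apply (derivable_pt_comp (fun v => L * v) exp). 
    apply derivable_pt_scal. apply derivable_pt_id. apply derivable_pt_exp.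
Qed.

Lemma gronwall T u A L : 0 < T -> 0 <= A -> 0 < L -> path_R T u ->
  (forall t, 0 <= t <= T -> u t <= A + L * RInt (fun v => u (clamp T v)) 0 t) ->
  forall t, 0 <= t <= T -> u t <= A * exp (L * t).
Proof.
  intros HT HA HL Hu H t Ht.
  assert (Heps : forall eps, 0 < eps -> u t <= (A + eps) * exp (L * t)).
  { intros eps He.
    assert (Hc : path_R T (fun t => u t - (A + eps) * exp (L * t))).
    { apply path_R_minus; auto. apply path_R_cont. intros s.
      apply derivable_continuous_pt. apply derivable_pt_mult. apply derivable_pt_const.
      apply (derivable_pt_comp (fun v => L * v) exp).
      apply derivable_pt_scal. apply derivable_pt_id. apply derivable_pt_exp. }
    generalize (cont_ind T (fun t => u t - (A + eps) * exp (L * t)) HT Hc). intros Hci.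
    enough (u t - (A + eps) * exp (L * t) <= 0) by lra. apply Hci; auto.
    intros tau Htau Hbel.
    assert (Hex1 : ex_RInt (fun v => u (clamp T v)) 0 tau).
    { apply (ex_RInt_clamp (E := R_CompleteNormedModule)). lra. exact Hu. }
    assert (Hex2 : ex_RInt (fun v => (A + eps) * exp (L * v)) 0 tau).
    { apply (ex_RInt_continuous (V := R_CompleteNormedModule)). intros z _. apply continuity_pt_filterlim.
      apply derivable_continuous_pt. apply derivable_pt_mult. apply derivable_pt_const.
      apply (derivable_pt_comp (fun v => L * v) exp).
      apply derivable_pt_scal. apply derivable_pt_id. apply derivable_pt_exp. }
    assert (Hle : RInt (fun v => u (clamp T v)) 0 tau <= RInt (fun v => (A + eps) * exp (L * v)) 0 tau).
    { apply RInt_le; auto. lra. intros v Hv. rewrite clamp_id by lra. specialize (Hbel v ltac:(lra)). lra. }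
    rewrite RInt_exp in Hle by auto.
    specialize (H tau Htau).
    assert (L * RInt (fun v => u (clamp T v)) 0 tau <= (A + eps) * (exp (L * tau) - 1)).
    { replace ((A + eps) * (exp (L * tau) - 1)) with (L * ((A + eps) / L * (exp (L * tau) - 1))) by (field; lra).
      apply Rmult_le_compat_l; lra. }
    lra. }
  destruct (Rle_lt_dec (u t) (A * exp (L * t))) as [|Hlt]; auto.
  assert (Hp : 0 < exp (L * t)) by apply exp_pos.
  specialize (Heps ((u t - A * exp (L * t)) / (2 * exp (L * t)))).
  assert (0 < (u t - A * exp (L * t)) / (2 * exp (L * t))) by (apply Rdiv_lt_0_compat; lra).
  specialize (Heps H0).
  replace ((A + (u t - A * exp (L * t)) / (2 * exp (L * t))) * exp (L * t)) with
    (A * exp (L * t) + (u t - A * exp (L * t)) / 2) in Heps by (field; lra). lra.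
Qed.

Definition Hsub r (x y : Hs r) : Hs r := mkH (ssub (hv x) (hv y)) (in_H_sub r _ _ (hp x) (hp y)).

Definition hcont r T (f : R -> Hs r) : Prop :=
  forall t, 0 <= t <= T -> forall eps, 0 < eps -> exists del, 0 < del /\
    forall t', 0 <= t' <= T -> Rabs (t' - t) < del -> normH r (ssub (hv (f t')) (hv (f t))) < eps.

Lemma hcont_contE r T f : hcont r T f <-> contE (E := Hs_NM r) T f.
Proof. reflexivity. Qed.
Lemma hcont_contE' r T f : hcont r T f <-> contE (E := Hs_CNM r) T f.
Proof. reflexivity. Qed.

Lemma normH_rev r a b : in_H r a -> in_H r b -> Rabs (normH r a - normH r b) <= normH r (ssub a b).
Proof.
  intros Ha Hb. 
  assert (H1 : normH r a <= normH r (ssub a b) + normH r b).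
  { replace a with (sadd (ssub a b) b) at 1. apply normH_triangle; auto. apply in_H_sub; auto.
    apply functional_extensionality; intros; unfold sadd, ssub; ring. }
  assert (H2 : normH r b <= normH r (ssub a b) + normH r a).
  { replace b with (sadd (ssub b a) a) at 1. rewrite normH_ssub_sym. apply normH_triangle; auto. apply in_H_sub; auto.
    apply functional_extensionality; intros; unfold sadd, ssub; ring. }
  apply Rabs_le. lra.
Qed.

Lemma hcont_norm_diff r T x x' : hcont r T x -> hcont r T x' ->
  path_R T (fun t => normH r (ssub (hv (x t)) (hv (x' t)))).
Proof.
  intros Hx Hx' t Ht eps He.
  destruct (Hx t Ht (eps/2) ltac:(lra)) as [d1 [Hd1 H1]].
  destruct (Hx' t Ht (eps/2) ltac:(lra)) as [d2 [Hd2 H2]].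
  exists (Rmin d1 d2). split. apply Rmin_pos; auto.
  intros t' Ht' Hd. specialize (H1 t' Ht' (Rlt_le_trans _ _ _ Hd (Rmin_l _ _))).
  specialize (H2 t' Ht' (Rlt_le_trans _ _ _ Hd (Rmin_r _ _))).
  eapply Rle_lt_trans. apply normH_rev; apply in_H_sub; apply hp.
  replace (ssub (ssub (hv (x t')) (hv (x' t'))) (ssub (hv (x t)) (hv (x' t)))) with
    (sadd (ssub (hv (x t')) (hv (x t))) (sopp (ssub (hv (x' t')) (hv (x' t))))).
  2: apply functional_extensionality; intros; unfold sadd, ssub, sopp; ring.
  eapply Rle_lt_trans. apply normH_triangle. apply in_H_sub; apply hp. apply in_H_opp, in_H_sub; apply hp.
  unfold sopp. replace (fun j => - ssub (hv (x' t')) (hv (x' t)) j) with (sscal (-1) (ssub (hv (x' t')) (hv (x' t)))).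
  rewrite normH_scal. replace (Rabs (-1)) with 1 by (rewrite Rabs_left; lra). lra.
  apply functional_extensionality; intros; unfold sscal; ring.
Qed.

Definition hsol r T (G : R -> Hs r -> Hs r) (x0 : Hs r) (eta x : R -> Hs r) : Prop :=
  hcont r T x /\ forall t, 0 <= t <= T ->
    is_RInt (V := Hs_CNM r) (fun v => G v (x v)) 0 t (Hsub r (Hsub r (x t) x0) (eta t)).

Definition Glip r T (G : R -> Hs r -> Hs r) L : Prop :=
  forall v z z', 0 <= v <= T -> normH r (ssub (hv (G v z)) (hv (G v z'))) <= L * normH r (ssub (hv z) (hv z')).

Definition Gcont r T (G : R -> Hs r -> Hs r) : Prop :=
  forall z, hcont r T z -> hcont r T (fun v => G v (z v)).

Lemma normH_3 r a b c : in_H r a -> in_H r b -> in_H r c ->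
  normH r (sadd (sadd a b) c) <= normH r a + normH r b + normH r c.
Proof.
  intros. eapply Rle_trans. apply normH_triangle. apply in_H_add; auto. auto.
  generalize (normH_triangle r a b H H0). lra.
Qed.

Lemma hsol_dep r T G L x0 x0' eta eta' x x' D : 0 < T -> 0 < L -> 0 <= D ->
  Glip r T G L -> 
  hsol r T G x0 eta x -> hsol r T G x0' eta' x' ->
  (forall t, 0 <= t <= T -> normH r (ssub (hv (eta t)) (hv (eta' t))) <= D) ->
  forall t, 0 <= t <= T ->
    normH r (ssub (hv (x t)) (hv (x' t))) <= (normH r (ssub (hv x0) (hv x0')) + D) * exp (L * t).
Proof.
  intros HT HL HD HGL [Hc Hx] [Hc' Hx'] Heta.
  set (u := fun t => normH r (ssub (hv (x t)) (hv (x' t)))).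
  assert (Hu : path_R T u) by (apply hcont_norm_diff; auto).
  apply (gronwall T u); auto.
  { generalize (normH_nn r (ssub (hv x0) (hv x0'))). lra. }
  intros t Ht.
  assert (HI := is_RInt_minus _ _ _ _ _ _ (Hx t Ht) (Hx' t Ht)).
  assert (Hex : ex_RInt (fun v => u (clamp T v)) 0 t).
  { apply (ex_RInt_clamp (E := R_CompleteNormedModule)). lra. exact Hu. }
  assert (Hexs : ex_RInt (fun v => L * u (clamp T v)) 0 t).
  { apply (ex_RInt_scal (V := R_NormedModule)) with (k := L) in Hex. exact Hex. }
  assert (Hn : norm (minus (Hsub r (Hsub r (x t) x0) (eta t)) (Hsub r (Hsub r (x' t) x0') (eta' t)))
     <= RInt (fun v => L * u (clamp T v)) 0 t).
  { apply (norm_RInt_le (V := Hs_NM r) (fun v => minus (G v (x v)) (G v (x' v))) (fun v => L * u (clamp T v)) 0 t).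
    lra. 2: exact HI. 2: exact (RInt_correct (V := R_CompleteNormedModule) _ _ _ Hexs).
    intros v Hv.
    change (normH r (ssub (hv (G v (x v))) (hv (G v (x' v)))) <= L * u (clamp T v)).
    rewrite clamp_id by lra. apply HGL; lra. }
  rewrite (RInt_scal (V := R_CompleteNormedModule)) in Hn by exact Hex.
  change (normH r (ssub (ssub (ssub (hv (x t)) (hv x0)) (hv (eta t))) (ssub (ssub (hv (x' t)) (hv x0')) (hv (eta' t)))) <= L * RInt (fun v => u (clamp T v)) 0 t) in Hn.
  unfold u at 1.
  replace (ssub (hv (x t)) (hv (x' t))) with
    (sadd (sadd (ssub (hv x0) (hv x0')) (ssub (hv (eta t)) (hv (eta' t))))
      (ssub (ssub (ssub (hv (x t)) (hv x0)) (hv (eta t))) (ssub (ssub (hv (x' t)) (hv x0')) (hv (eta' t))))).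
  2: apply functional_extensionality; intros; unfold sadd, ssub; ring.
  eapply Rle_trans. apply normH_3; repeat apply in_H_sub; apply hp.
  specialize (Heta t Ht). lra.
Qed.

Lemma hcont_plus r T f g : hcont r T f -> hcont r T g -> hcont r T (fun t => Hplus r (f t) (g t)).
Proof.
  intros Hf Hg t Ht eps He.
  destruct (Hf t Ht (eps/2) ltac:(lra)) as [d1 [Hd1 H1]].
  destruct (Hg t Ht (eps/2) ltac:(lra)) as [d2 [Hd2 H2]].
  exists (Rmin d1 d2). split. apply Rmin_pos; auto.
  intros t' Ht' Hd. specialize (H1 t' Ht' (Rlt_le_trans _ _ _ Hd (Rmin_l _ _))).
  specialize (H2 t' Ht' (Rlt_le_trans _ _ _ Hd (Rmin_r _ _))). simpl.
  replace (ssub (sadd (hv (f t')) (hv (g t'))) (sadd (hv (f t)) (hv (g t)))) with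
    (sadd (ssub (hv (f t')) (hv (f t))) (ssub (hv (g t')) (hv (g t)))).
  2: apply functional_extensionality; intros; unfold sadd, ssub; ring.
  eapply Rle_lt_trans. apply normH_triangle; apply in_H_sub; apply hp. lra.
Qed.

Lemma hcont_const r T c : hcont r T (fun _ => c).
Proof. intros t Ht eps He. exists 1. split. lra. intros. rewrite normH_ssub_self. auto. Qed.

Lemma hcont_RInt r T (h : R -> Hs r) : 0 < T -> hcont r T h ->
  hcont r T (fun t => RInt (V := Hs_CNM r) (fun v => h (clamp T v)) 0 t).
Proof.
  intros HT Hh.
  destruct (cont_bound (E := Hs_NM r) T h ltac:(lra) Hh) as [M [HM HMb]].
  intros t Ht eps He. exists (eps / (M + 1)). split. apply Rdiv_lt_0_compat; lra.
  intros t' Ht' Hd.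
  assert (H := RInt_lip (E := Hs_CNM r) (fun v => h (clamp T v)) M t t'
     (cont_clamp (E := Hs_NM r) T h ltac:(lra) Hh) HMb).
  change (normH r (ssub (hv (RInt (V := Hs_CNM r) (fun v => h (clamp T v)) 0 t')) (hv (RInt (V := Hs_CNM r) (fun v => h (clamp T v)) 0 t))) <= M * Rabs (t' - t)) in H.
  eapply Rle_lt_trans. exact H.
  apply Rle_lt_trans with ((M + 1) * Rabs (t' - t)). apply Rmult_le_compat_r. apply Rabs_pos. lra.
  apply Rmult_lt_reg_l with (/ (M + 1)). apply Rinv_0_lt_compat; lra.
  rewrite <- Rmult_assoc, Rinv_l, Rmult_1_l by lra. rewrite Rmult_comm. exact Hd.
Qed.

Fixpoint pic r T (G : R -> Hs r -> Hs r) (x0 : Hs r) (eta : R -> Hs r) (n : nat) : R -> Hs r :=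
  match n with
  | O => fun t => Hplus r x0 (eta t)
  | S m => fun t => Hplus r (Hplus r x0 (eta t))
              (RInt (V := Hs_CNM r) (fun v => G (clamp T v) (pic r T G x0 eta m (clamp T v))) 0 t)
  end.

Lemma pic_cont r T G x0 eta n : 0 < T -> Gcont r T G -> hcont r T eta -> hcont r T (pic r T G x0 eta n).
Proof.
  intros HT HG He. induction n; simpl.
  - apply hcont_plus; auto. apply hcont_const.
  - apply hcont_plus. apply hcont_plus; auto. apply hcont_const.
    apply (hcont_RInt r T (fun v => G v (pic r T G x0 eta n v))); auto.
Qed.

Lemma exp_ge1 x : 0 <= x -> 1 <= exp x.
Proof. intros. destruct H. left. rewrite <- exp_0. apply exp_increasing; auto. subst; rewrite exp_0; lra. Qed.

Lemma pic_diff r T G L x0 eta M0 : 0 < T -> 0 < L -> 0 <= M0 -> Glip r T G L -> Gcont r T G -> hcont r T eta ->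
  (forall v, normH r (hv (G (clamp T v) (pic r T G x0 eta 0 (clamp T v)))) <= M0) ->
  forall n t, 0 <= t <= T ->
    normH r (ssub (hv (pic r T G x0 eta (S n) t)) (hv (pic r T G x0 eta n t))) <= T * M0 * (/ 2) ^ n * exp (2 * L * t).
Proof.
  intros HT HL HM0 HGL HGc He HM. set (p := pic r T G x0 eta).
  assert (Hh : forall n, hcont r T (fun v => G v (p n v))).
  { intros n. apply HGc. apply pic_cont; auto. }
  assert (Hex : forall n a b, ex_RInt (V := Hs_CNM r) (fun v => G (clamp T v) (p n (clamp T v))) a b).
  { intros n a b. apply (ex_RInt_clamp (E := Hs_CNM r) T (fun v => G v (p n v))). lra. apply Hh. }
  induction n; intros t Ht.
  - replace (ssub (hv (p 1%nat t)) (hv (p 0%nat t))) with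
      (hv (RInt (V := Hs_CNM r) (fun v => G (clamp T v) (p 0%nat (clamp T v))) 0 t)).
    2:{ apply functional_extensionality; intros j. unfold p. simpl. unfold ssub, sadd. ring. }
    assert (H := norm_RInt_le_const (V := Hs_NM r) _ 0 t _ M0 (proj1 Ht) (fun v _ => HM v) (RInt_correct _ _ _ (Hex 0%nat 0 t))).
    change (normH r (hv (RInt (V := Hs_CNM r) (fun v => G (clamp T v) (p 0%nat (clamp T v))) 0 t)) <= (t - 0) * M0) in H.
    eapply Rle_trans. exact H. simpl. rewrite Rmult_1_r.
    assert (1 <= exp (2 * L * t)) by (apply exp_ge1; nra).
    assert ((t - 0) * M0 <= T * M0) by (apply Rmult_le_compat_r; lra).
    apply Rle_trans with (T * M0); auto. rewrite <- (Rmult_1_r (T * M0)) at 1.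
    apply Rmult_le_compat_l; auto. apply Rmult_le_pos; lra.
  - set (I1 := RInt (V := Hs_CNM r) (fun v => G (clamp T v) (p (S n) (clamp T v))) 0 t).
    set (I0 := RInt (V := Hs_CNM r) (fun v => G (clamp T v) (p n (clamp T v))) 0 t).
    replace (ssub (hv (p (S (S n)) t)) (hv (p (S n) t))) with (ssub (hv I1) (hv I0)).
    2:{ apply functional_extensionality; intros j. unfold I1, I0, p. simpl. unfold ssub, sadd. ring. }
    set (c := L * (T * M0 * (/ 2) ^ n)).
    assert (Hg : ex_RInt (V := R_CompleteNormedModule) (fun v => c * exp (2 * L * v)) 0 t).
    { apply (ex_RInt_continuous (V := R_CompleteNormedModule)). intros z _. apply continuity_pt_filterlim.
      apply derivable_continuous_pt. apply derivable_pt_mult. apply derivable_pt_const.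
      apply (derivable_pt_comp (fun v => 2 * L * v) exp).
      apply derivable_pt_scal. apply derivable_pt_id. apply derivable_pt_exp. }
    assert (Hc0 : 0 <= T * M0 * (/ 2) ^ n).
    { apply Rmult_le_pos. apply Rmult_le_pos; lra. apply pow_le; lra. }
    assert (H : norm (minus I1 I0) <= RInt (fun v => c * exp (2 * L * v)) 0 t).
    { apply (norm_RInt_le (V := Hs_NM r) (fun v => minus (G (clamp T v) (p (S n) (clamp T v))) (G (clamp T v) (p n (clamp T v))))
        (fun v => c * exp (2 * L * v)) 0 t). lra.
      2: exact (is_RInt_minus _ _ _ _ _ _ (RInt_correct _ _ _ (Hex (S n) 0 t)) (RInt_correct _ _ _ (Hex n 0 t))).
      2: exact (RInt_correct (V := R_CompleteNormedModule) _ _ _ Hg).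
      intros v Hv.
      change (normH r (ssub (hv (G (clamp T v) (p (S n) (clamp T v)))) (hv (G (clamp T v) (p n (clamp T v))))) <= c * exp (2 * L * v)).
      rewrite clamp_id by lra. eapply Rle_trans. apply HGL; lra. unfold c. rewrite Rmult_assoc.
      apply Rmult_le_compat_l. lra. apply IHn. lra. }
    change (normH r (ssub (hv I1) (hv I0)) <= RInt (fun v => c * exp (2 * L * v)) 0 t) in H.
    rewrite RInt_exp in H by lra. eapply Rle_trans. exact H. unfold c. simpl.
    assert (1 <= exp (2 * L * t)) by (apply exp_ge1; nra).
    replace (L * (T * M0 * (/ 2) ^ n) / (2 * L)) with (T * M0 * (/ 2) ^ n / 2) by (field; lra).
    replace (T * M0 * (/ 2 * (/ 2) ^ n) * exp (2 * L * t)) with (T * M0 * (/ 2) ^ n / 2 * exp (2 * L * t)) by (field).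
    assert (0 <= T * M0 * (/ 2) ^ n / 2) by lra. nra.
Qed.

Lemma small_pow eps : 0 < eps -> exists N, forall n, (N <= n)%nat -> (/ 2) ^ n < eps.
Proof.
  intros He. destruct (pow_lt_1_zero (/ 2) ltac:(rewrite Rabs_pos_eq; lra) eps He) as [N HN].
  exists N. intros n Hn. specialize (HN n Hn). rewrite Rabs_pos_eq in HN; auto. apply pow_le; lra.
Qed.

Lemma pic_cauchy r T G L x0 eta M0 : 0 < T -> 0 < L -> 0 <= M0 -> Glip r T G L -> Gcont r T G -> hcont r T eta ->
  (forall v, normH r (hv (G (clamp T v) (pic r T G x0 eta 0 (clamp T v)))) <= M0) ->
  forall n m t, 0 <= t <= T ->
    normH r (ssub (hv (pic r T G x0 eta (n + m) t)) (hv (pic r T G x0 eta n t))) <=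
      2 * (T * M0 * exp (2 * L * T)) * ((/ 2) ^ n - (/ 2) ^ (n + m)).
Proof.
  intros HT HL HM0 HGL HGc He HM n m t Ht. set (p := pic r T G x0 eta).
  set (C := T * M0 * exp (2 * L * T)).
  assert (Hd : forall k, normH r (ssub (hv (p (S k) t)) (hv (p k t))) <= C * (/ 2) ^ k).
  { intros k. eapply Rle_trans. apply (pic_diff r T G L x0 eta M0); auto.
    unfold C. replace (T * M0 * (/ 2) ^ k * exp (2 * L * t)) with (T * M0 * exp (2 * L * t) * (/ 2) ^ k) by ring.
    apply Rmult_le_compat_r. apply pow_le; lra. apply Rmult_le_compat_l. apply Rmult_le_pos; lra.
    destruct (Req_dec t T). subst; lra. left. apply exp_increasing. nra. }
  induction m.
  - rewrite Nat.add_0_r, normH_ssub_self. lra.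
  - rewrite Nat.add_succ_r. eapply Rle_trans. apply (normH_ssub_tri r _ (hv (p (n + m)%nat t))); apply hp.
    specialize (Hd (n + m)%nat). rewrite <- tech_pow_Rmult.
    set (X := (/ 2) ^ (n + m)) in *. set (Y := (/ 2) ^ n) in *.
    replace (2 * C * (Y - / 2 * X)) with (2 * C * (Y - X) + C * X) by field. lra.
Qed.

Definition plim r T G x0 eta (t : R) : Hs r :=
  lim (T := Hs_CS r) (filtermap (fun n => pic r T G x0 eta n t) eventually).

Lemma plim_close r T G L x0 eta M0 : 0 < T -> 0 < L -> 0 <= M0 -> Glip r T G L -> Gcont r T G -> hcont r T eta ->
  (forall v, normH r (hv (G (clamp T v) (pic r T G x0 eta 0 (clamp T v)))) <= M0) ->
  forall n t, 0 <= t <= T ->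
    normH r (ssub (hv (plim r T G x0 eta t)) (hv (pic r T G x0 eta n t))) <= 2 * (T * M0 * exp (2 * L * T)) * (/ 2) ^ n.
Proof.
  intros HT HL HM0 HGL HGc He HM n t Ht. set (p := pic r T G x0 eta).
  set (C := T * M0 * exp (2 * L * T)).
  assert (HC0 : 0 <= C). { unfold C. apply Rmult_le_pos. apply Rmult_le_pos; lra. left; apply exp_pos. }
  assert (Hc := pic_cauchy r T G L x0 eta M0 HT HL HM0 HGL HGc He HM).
  assert (Hcb : forall n m, (n <= m)%nat -> normH r (ssub (hv (p m t)) (hv (p n t))) <= 2 * C * (/ 2) ^ n).
  { intros a b Hab. replace b with (a + (b - a))%nat by lia. eapply Rle_trans. apply Hc; auto.
    assert (0 <= (/ 2) ^ (a + (b - a))) by (apply pow_le; lra). fold C. nra. }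
  assert (Hcauchy : cauchy (T := Hs_US r) (filtermap (fun n => p n t) eventually)).
  { intros eps. destruct (small_pow (eps / (2 * C + 1))) as [N HN].
    { apply Rdiv_lt_0_compat. apply cond_pos. lra. }
    exists (p N t). exists N. intros m Hm. change (normH r (ssub (hv (p m t)) (hv (p N t))) < eps).
    eapply Rle_lt_trans. apply Hcb; auto. specialize (HN N (le_n _)).
    assert (0 <= (/ 2) ^ N) by (apply pow_le; lra).
    apply Rle_lt_trans with ((2 * C + 1) * (/ 2) ^ N). nra.
    apply Rmult_lt_reg_l with (/ (2 * C + 1)). apply Rinv_0_lt_compat; lra.
    rewrite <- Rmult_assoc, Rinv_l, Rmult_1_l by lra. rewrite Rmult_comm. exact HN. }
  assert (Hlim := complete_cauchy (T := Hs_CS r) _ (filtermap_proper_filter _ _ _ _ eventually_filter) Hcauchy).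
  fold p. change (lim (T := Hs_CS r) (filtermap (fun n => p n t) eventually)) with (plim r T G x0 eta t) in Hlim.
  apply Rnot_lt_le. intros Hlt.
  set (X := normH r (ssub (hv (plim r T G x0 eta t)) (hv (p n t)))) in *.
  destruct (Hlim (mkposreal (X - 2 * C * (/ 2) ^ n) ltac:(lra))) as [N HN].
  specialize (HN (max N n) (Nat.le_max_l _ _)).
  change (normH r (ssub (hv (p (max N n) t)) (hv (plim r T G x0 eta t))) < X - 2 * C * (/ 2) ^ n) in HN.
  assert (H2 := Hcb n (max N n) (Nat.le_max_r _ _)).
  assert (X <= normH r (ssub (hv (plim r T G x0 eta t)) (hv (p (max N n) t))) + normH r (ssub (hv (p (max N n) t)) (hv (p n t)))).
  { apply normH_ssub_tri; apply hp. }
  rewrite normH_ssub_sym in HN. lra.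
Qed.

Lemma small_const K eps : 0 <= K -> 0 < eps -> exists n, K * (/ 2) ^ n < eps.
Proof.
  intros HK He. destruct (small_pow (eps / (K + 1))) as [N HN]. apply Rdiv_lt_0_compat; lra.
  exists N. specialize (HN N (le_n _)). assert (0 <= (/ 2) ^ N) by (apply pow_le; lra).
  apply Rle_lt_trans with ((K + 1) * (/ 2) ^ N). nra.
  apply Rmult_lt_reg_l with (/ (K + 1)). apply Rinv_0_lt_compat; lra.
  rewrite <- Rmult_assoc, Rinv_l, Rmult_1_l by lra. rewrite Rmult_comm. exact HN.
Qed.

Lemma hsol_exists r T G L x0 eta : 0 < T -> 0 < L -> Glip r T G L -> Gcont r T G -> hcont r T eta ->
  exists x, hsol r T G x0 eta x.
Proof.
  intros HT HL HGL HGc He. set (p := pic r T G x0 eta).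
  destruct (cont_bound (E := Hs_NM r) T (fun v => G v (p 0%nat v)) ltac:(lra)) as [M0 [HM0 HM]].
  { apply HGc. apply pic_cont; auto. }
  set (C := 2 * (T * M0 * exp (2 * L * T))).
  assert (HC0 : 0 <= C). { unfold C. apply Rmult_le_pos. lra. apply Rmult_le_pos. apply Rmult_le_pos; lra. left; apply exp_pos. }
  set (xl := plim r T G x0 eta).
  assert (Hclose : forall n t, 0 <= t <= T -> normH r (ssub (hv (xl t)) (hv (p n t))) <= C * (/ 2) ^ n).
  { intros n t Ht. apply (plim_close r T G L x0 eta M0); auto. }
  assert (Hpc : forall n, hcont r T (p n)) by (intros; apply pic_cont; auto).
  assert (Hxc : hcont r T xl).
  { intros t Ht eps Heps.
    destruct (small_const C (eps / 3) HC0 ltac:(lra)) as [n Hn].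
    destruct (Hpc n t Ht (eps / 3) ltac:(lra)) as [d [Hd Hd']].
    exists d. split; auto. intros t' Ht' Htt.
    replace (ssub (hv (xl t')) (hv (xl t))) with
      (sadd (sadd (ssub (hv (xl t')) (hv (p n t'))) (ssub (hv (p n t')) (hv (p n t)))) (ssub (hv (p n t)) (hv (xl t)))).
    2: apply functional_extensionality; intros; unfold sadd, ssub; ring.
    eapply Rle_lt_trans. apply normH_3; apply in_H_sub; apply hp.
    specialize (Hd' t' Ht' Htt). generalize (Hclose n t' Ht') (Hclose n t Ht). rewrite (normH_ssub_sym r (hv (p n t))). lra. }
  exists xl. split; auto.
  intros t Ht.
  assert (HGx : hcont r T (fun v => G v (xl v))) by (apply HGc; auto).
  assert (Hex : ex_RInt (V := Hs_CNM r) (fun v => G (clamp T v) (xl (clamp T v))) 0 t).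
  { apply (ex_RInt_clamp (E := Hs_CNM r) T (fun v => G v (xl v))). lra. exact HGx. }
  set (Ih := RInt (V := Hs_CNM r) (fun v => G (clamp T v) (xl (clamp T v))) 0 t).
  assert (Heq : forall j, hv (xl t) j = hv x0 j + hv (eta t) j + hv Ih j).
  { assert (Hz : normH r (ssub (hv (xl t)) (sadd (sadd (hv x0) (hv (eta t))) (hv Ih))) = 0).
    { apply Rle_antisym; [|apply normH_nn]. apply Rnot_lt_le. intros Hpos.
      set (Z := normH r (ssub (hv (xl t)) (sadd (sadd (hv x0) (hv (eta t))) (hv Ih)))) in *.
      destruct (small_const (C + T * L * C) Z ltac:(apply Rplus_le_le_0_compat; auto; apply Rmult_le_pos; auto; nra) Hpos) as [n Hn].
      assert (Hexn : ex_RInt (V := Hs_CNM r) (fun v => G (clamp T v) (p n (clamp T v))) 0 t).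
      { apply (ex_RInt_clamp (E := Hs_CNM r) T (fun v => G v (p n v))). lra. apply HGc; auto. }
      set (In := RInt (V := Hs_CNM r) (fun v => G (clamp T v) (p n (clamp T v))) 0 t).
      assert (HI : norm (minus In Ih) <= (t - 0) * (L * (C * (/ 2) ^ n))).
      { apply (norm_RInt_le_const (V := Hs_NM r) (fun v => minus (G (clamp T v) (p n (clamp T v))) (G (clamp T v) (xl (clamp T v))))).
        lra. 2: exact (is_RInt_minus _ _ _ _ _ _ (RInt_correct _ _ _ Hexn) (RInt_correct _ _ _ Hex)).
        intros v Hv.
        change (normH r (ssub (hv (G (clamp T v) (p n (clamp T v)))) (hv (G (clamp T v) (xl (clamp T v))))) <= L * (C * (/ 2) ^ n)).
        rewrite clamp_id by lra. eapply Rle_trans. apply HGL; lra. apply Rmult_le_compat_l. lra.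
        rewrite normH_ssub_sym. apply Hclose; lra. }
      change (normH r (ssub (hv In) (hv Ih)) <= (t - 0) * (L * (C * (/ 2) ^ n))) in HI.
      assert (E : ssub (hv (xl t)) (sadd (sadd (hv x0) (hv (eta t))) (hv Ih)) =
                  sadd (ssub (hv (xl t)) (hv (p (S n) t))) (ssub (hv In) (hv Ih))).
      { apply functional_extensionality; intros j. unfold In, p. simpl. unfold sadd, ssub. ring. }
      assert (HZ : Z <= C * (/ 2) ^ (S n) + (t - 0) * (L * (C * (/ 2) ^ n))).
      { unfold Z. rewrite E. eapply Rle_trans. apply normH_triangle; apply in_H_sub; apply hp.
        apply Rplus_le_compat; auto. }
      assert (0 <= (/ 2) ^ n) by (apply pow_le; lra).
      assert (C * (/ 2) ^ S n <= C * (/ 2) ^ n). { simpl. nra. }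
      assert ((t - 0) * (L * (C * (/ 2) ^ n)) <= T * L * C * (/ 2) ^ n).
      { replace (T * L * C * (/ 2) ^ n) with (T * (L * (C * (/ 2) ^ n))) by ring.
        apply Rmult_le_compat_r. apply Rmult_le_pos. lra. nra. lra. }
      nra. }
    intros j. generalize (normH_zero r _ (in_H_sub r _ _ (hp _) (in_H_add r _ _ (in_H_add r _ _ (hp x0) (hp (eta t))) (hp Ih))) Hz j).
    unfold ssub, sadd. lra. }
  replace (Hsub r (Hsub r (xl t) x0) (eta t)) with Ih.
  - apply (is_RInt_ext (V := Hs_NM r) (fun v => G (clamp T v) (xl (clamp T v)))).
    intros v Hv. rewrite Rmin_left, Rmax_right in Hv by lra. rewrite clamp_id by lra. auto.
    exact (RInt_correct _ _ _ Hex).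
  - apply Hs_eq. apply functional_extensionality; intros j. simpl. unfold ssub. rewrite Heq. ring.
Qed.

Lemma coord_foldr r j (g : R * R -> R * R -> Hs r) (x : R * R) (l : list (R * R)) :
  hv (seq.foldr (plus (G := Hs_AM r)) (zero (G := Hs_AM r)) (seq.pairmap g x l)) j =
  seq.foldr Rplus 0 (seq.pairmap (fun a b => hv (g a b) j) x l).
Proof.
  revert x. induction l as [|y l IH]; intros x; simpl. reflexivity.
  unfold sadd. rewrite IH. reflexivity.
Qed.

Lemma coord_Riemann r j (F : R -> Hs r) ptd :
  hv (Riemann_sum (V := Hs_MS r) F ptd) j = Riemann_sum (V := R_ModuleSpace) (fun v => hv (F v) j) ptd.
Proof.
  unfold Riemann_sum. rewrite coord_foldr. reflexivity.
Qed.

Lemma coord_cont r j (L : Hs r) : filterlim (fun y : Hs_NM r => hv y j) (locally L) (locally (hv L j)).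
Proof.
  apply filterlim_locally. intros eps.
  assert (Hw := wt_pos r j). assert (Hsw : 0 < sqrt (wt r j)) by (apply sqrt_lt_R0; lra).
  assert (Hd : 0 < eps * sqrt (wt r j)) by (apply Rmult_lt_0_compat; [apply cond_pos|auto]).
  exists (mkposreal _ Hd). intros y Hy. change (normH r (ssub (hv y) (hv L)) < eps * sqrt (wt r j)) in Hy.
  change (Rabs (hv y j - hv L j) < eps).
  assert (E : hv y j - hv L j = ssub (hv y) (hv L) j) by reflexivity. rewrite E.
  eapply Rle_lt_trans. apply coord_bound. apply in_H_sub; apply hp.
  apply Rmult_lt_reg_r with (sqrt (wt r j)); [exact Hsw|]. unfold Rdiv. rewrite Rmult_assoc, Rinv_l, Rmult_1_r by lra.
  exact Hy.
Qed.

Lemma is_RInt_coord r j (F : R -> Hs r) a b (L : Hs r) :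
  is_RInt (V := Hs_NM r) F a b L -> is_RInt (fun v => hv (F v) j) a b (hv L j).
Proof.
  intros H. unfold is_RInt in *.
  eapply filterlim_ext. 2: apply (filterlim_comp _ _ _ _ (fun y : Hs_NM r => hv y j) _ _ _ H (coord_cont r j L)).
  intros ptd. simpl. unfold sscal. apply (f_equal (fun z => sign (b - a) * z)). apply (coord_Riemann r j F ptd).
Qed.

Lemma path_R_abs T f : path_R T f -> path_R T (fun t => Rabs (f t)).
Proof.
  intros H t Ht eps He. destruct (H t Ht eps He) as [d [Hd H']]. exists d; split; auto.
  intros t' Ht' Hdt. eapply Rle_lt_trans. apply Rabs_triang_inv2. auto.
Qed.

Lemma is_RInt_R_unique (f : R -> R) a b l1 l2 : is_RInt f a b l1 -> is_RInt f a b l2 -> l1 = l2.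
Proof.
  intros H1 H2. apply (is_RInt_unique (V := R_CompleteNormedModule)) in H1.
  apply (is_RInt_unique (V := R_CompleteNormedModule)) in H2. congruence.
Qed.

Lemma apriori T (A' : R -> R) a S0 w W K0 K1 Sg : 0 < T -> 0 <= a -> 0 <= K0 -> 0 <= K1 -> 0 <= W ->
  (forall y, Rabs (A' y) <= K0 + K1 * Rabs y) -> (forall t, 0 <= t <= T -> Rabs (w t) <= W) ->
  path_R T Sg ->
  (forall t, 0 <= t <= T -> is_RInt (fun v => A' (Sg v)) 0 t (Sg t - S0 - a * w t)) ->
  forall t, 0 <= t <= T -> Rabs (Sg t) <= (Rabs S0 + a * W + K0 * T) * exp ((K1 + 1) * t).
Proof.
  intros HT Ha HK0 HK1 HW HA Hw HS HI.
  set (u := fun t => Rabs (Sg t)).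
  apply (gronwall T u); auto. apply Rplus_le_le_0_compat. apply Rplus_le_le_0_compat. apply Rabs_pos. nra. nra. lra.
  apply path_R_abs; auto.
  intros t Ht.
  assert (Hu : path_R T u) by (apply path_R_abs; auto).
  assert (Hex : ex_RInt (fun v => u (clamp T v)) 0 t).
  { apply (ex_RInt_clamp (E := R_CompleteNormedModule)). lra. exact Hu. }
  assert (Hexg : ex_RInt (fun v => K0 + K1 * u (clamp T v)) 0 t).
  { apply (ex_RInt_plus (V := R_NormedModule) (fun _ => K0) (fun v => K1 * u (clamp T v))).
    apply ex_RInt_const. apply (ex_RInt_scal (V := R_NormedModule)) with (k := K1) in Hex. exact Hex. }
  assert (Hn : Rabs (Sg t - S0 - a * w t) <= RInt (fun v => K0 + K1 * u (clamp T v)) 0 t).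
  { apply (norm_RInt_le (V := R_NormedModule) (fun v => A' (Sg v)) (fun v => K0 + K1 * u (clamp T v)) 0 t).
    lra. 2: apply HI; auto. 2: exact (RInt_correct (V := R_CompleteNormedModule) _ _ _ Hexg).
    intros v Hv. unfold u. rewrite clamp_id by lra. apply HA. }
  rewrite (RInt_plus (V := R_CompleteNormedModule) (fun _ => K0) (fun v => K1 * u (clamp T v))) in Hn.
  2: apply ex_RInt_const. 2: apply (ex_RInt_scal (V := R_NormedModule)) with (k := K1) in Hex; exact Hex.
  rewrite (RInt_scal (V := R_CompleteNormedModule)) in Hn by exact Hex.
  rewrite (RInt_const (V := R_CompleteNormedModule)) in Hn.
  change (Rabs (Sg t - S0 - a * w t) <= (t - 0) * K0 + K1 * RInt (fun v => u (clamp T v)) 0 t) in Hn.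
  assert (H0 : 0 <= RInt (fun v => u (clamp T v)) 0 t).
  { apply RInt_ge_0; auto. lra. intros; apply Rabs_pos. }
  unfold u at 1.
  replace (Sg t) with ((Sg t - S0 - a * w t) + S0 + a * w t) by ring.
  eapply Rle_trans. apply Rabs_triang. eapply Rle_trans. apply Rplus_le_compat_r. apply Rabs_triang.
  rewrite Rabs_mult, (Rabs_pos_eq a) by auto.
  specialize (Hw t Ht). assert (a * Rabs (w t) <= a * W) by (apply Rmult_le_compat_l; auto).
  assert ((t - 0) * K0 <= K0 * T) by nra. nra.
Qed.

Definition emb (c : R) : Hs 0 := mkH (trunc 0%nat (fun _ => c)) (proj1 (trunc_in_H 0 0%nat _)).

Lemma emb_0 c : hv (emb c) 0%nat = c.
Proof. reflexivity. Qed.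
Lemma emb_S c k : hv (emb c) (S k) = 0.
Proof. simpl. unfold trunc. destruct (le_lt_dec (S k) 0%nat); [lia|auto]. Qed.

Lemma wt00 : wt 0 0%nat = 1.
Proof. unfold wt. simpl. rewrite Rplus_0_l, Rmult_0_r. apply Rpower_O. lra. Qed.

Lemma normH_emb a b : normH 0 (ssub (hv (emb a)) (hv (emb b))) = Rabs (a - b).
Proof.
  replace (ssub (hv (emb a)) (hv (emb b))) with (trunc 0%nat (fun _ => a - b)).
  2:{ apply functional_extensionality; intros j. simpl. unfold ssub, trunc. destruct (le_lt_dec j 0%nat); ring. }
  destruct (trunc_in_H 0 0%nat (fun _ => a - b)) as [_ E].
  assert (E2 : sum_f_R0 (sq 0 (fun _ => a - b)) 0 = Rabs (a - b) ^ 2).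
  { simpl. unfold sq. rewrite wt00, <- pow2_abs. ring. }
  rewrite E2 in E.
  apply Rle_antisym; apply sq_le_nn; try apply normH_nn; try apply Rabs_pos; lra.
Qed.

Lemma coord0_le (z : seqR) : in_H 0 z -> Rabs (z 0%nat) <= normH 0 z.
Proof.
  intros H. eapply Rle_trans. apply (coord_bound 0 z 0%nat); auto. rewrite wt00, sqrt_1. lra.
Qed.

Definition clip (R0 y : R) : R := Rmax (- R0) (Rmin y R0).
Lemma clip_id R0 y : Rabs y <= R0 -> clip R0 y = y.
Proof. intros H. apply Rabs_le_between in H. unfold clip, Rmax, Rmin. repeat destruct Rle_dec; lra. Qed.
Lemma clip_lip R0 y y' : 0 <= R0 -> Rabs (clip R0 y - clip R0 y') <= Rabs (y - y').
Proof. intros. unfold clip, Rmax, Rmin. repeat destruct Rle_dec; unfold Rabs; repeat destruct Rcase_abs; lra. Qed.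
Lemma clip_bound R0 y : 0 <= R0 -> Rabs (clip R0 y) <= R0.
Proof. intros. unfold clip, Rmax, Rmin. repeat destruct Rle_dec; unfold Rabs; repeat destruct Rcase_abs; lra. Qed.
Lemma clip_abs R0 y : 0 <= R0 -> Rabs (clip R0 y) <= Rabs y.
Proof. intros. unfold clip, Rmax, Rmin. repeat destruct Rle_dec; unfold Rabs; repeat destruct Rcase_abs; lra. Qed.

Definition G2 (At : R -> R) (R0 : R) (v : R) (z : Hs 0) : Hs 0 := emb (At (clip R0 (hv z 0%nat))).

Lemma G2_lip At C R0 T : 0 <= R0 ->
  (forall x y, Rabs (At x - At y) <= C * (1 + Rabs x) * Rabs (x - y)) ->
  Glip 0 T (G2 At R0) (Rabs C * (1 + R0) + 1).
Proof.
  intros HR HC v z z' _. unfold G2. rewrite normH_emb.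
  eapply Rle_trans. apply HC.
  assert (H1 : Rabs (clip R0 (hv z 0%nat) - clip R0 (hv z' 0%nat)) <= normH 0 (ssub (hv z) (hv z'))).
  { eapply Rle_trans. apply clip_lip; auto. apply (coord0_le (ssub (hv z) (hv z'))). apply in_H_sub; apply hp. }
  assert (H2 := clip_bound R0 (hv z 0%nat) HR).
  assert (H3 : C <= Rabs C) by apply Rle_abs.
  assert (0 <= Rabs (clip R0 (hv z 0%nat) - clip R0 (hv z' 0%nat))) by apply Rabs_pos.
  assert (0 <= normH 0 (ssub (hv z) (hv z'))) by apply normH_nn.
  assert (0 <= Rabs C) by apply Rabs_pos.
  apply Rle_trans with (Rabs C * (1 + R0) * Rabs (clip R0 (hv z 0%nat) - clip R0 (hv z' 0%nat))).
  - apply Rmult_le_compat_r; auto. generalize (Rabs_pos (clip R0 (hv z 0%nat))). nra.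
  - assert (0 <= Rabs C * (1 + R0)) by nra. nra.
Qed.

Lemma Gcont_of_lip r T (G0 : Hs r -> Hs r) L : 0 <= L ->
  (forall z z', normH r (ssub (hv (G0 z)) (hv (G0 z'))) <= L * normH r (ssub (hv z) (hv z'))) ->
  Gcont r T (fun _ z => G0 z).
Proof.
  intros HL H z Hz t Ht eps He. destruct (Hz t Ht (eps / (L + 1))) as [d [Hd Hd']].
  apply Rdiv_lt_0_compat; lra. exists d. split; auto. intros t' Ht' Htt.
  eapply Rle_lt_trans. apply H. specialize (Hd' t' Ht' Htt).
  apply Rle_lt_trans with ((L + 1) * normH r (ssub (hv (z t')) (hv (z t)))).
  apply Rmult_le_compat_r. apply normH_nn. lra.
  apply Rmult_lt_reg_l with (/ (L + 1)). apply Rinv_0_lt_compat; lra.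
  rewrite <- Rmult_assoc, Rinv_l, Rmult_1_l by lra. rewrite Rmult_comm. exact Hd'.
Qed.

Lemma hcont_emb T f : 0 <= T -> path_R T f -> hcont 0 T (fun t => emb (f (clamp T t))).
Proof.
  intros HT Hf t Ht eps He. destruct (Hf t Ht eps He) as [d [Hd H]]. exists d; split; auto.
  intros t' Ht' Htt. rewrite normH_emb. rewrite !clamp_id by auto. auto.
Qed.

Lemma path_R_scal T a f : path_R T f -> path_R T (fun t => a * f t).
Proof.
  intros Hf t Ht eps He. destruct (Hf t Ht (eps / (Rabs a + 1))) as [d [Hd H]].
  apply Rdiv_lt_0_compat; auto. generalize (Rabs_pos a); lra.
  exists d; split; auto. intros t' Ht' Htt. specialize (H t' Ht' Htt).
  replace (a * f t' - a * f t) with (a * (f t' - f t)) by ring. rewrite Rabs_mult.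
  assert (0 <= Rabs a) by apply Rabs_pos.
  apply Rle_lt_trans with ((Rabs a + 1) * Rabs (f t' - f t)). apply Rmult_le_compat_r. apply Rabs_pos. lra.
  apply Rmult_lt_reg_l with (/ (Rabs a + 1)). apply Rinv_0_lt_compat; lra.
  rewrite <- Rmult_assoc, Rinv_l, Rmult_1_l by lra. rewrite Rmult_comm. exact H.
Qed.

Lemma sol_to_real At R0 T a S0 w xh : 0 < T ->
  hsol 0 T (G2 At R0) (emb S0) (fun t => emb (a * w (clamp T t))) xh ->
  path_R T (fun t => hv (xh t) 0%nat) /\
  forall t, 0 <= t <= T -> is_RInt (fun v => At (clip R0 (hv (xh v) 0%nat))) 0 t (hv (xh t) 0%nat - S0 - a * w t).
Proof.
  intros HT [Hc HI]. split.
  - intros t Ht eps He. destruct (Hc t Ht eps He) as [d [Hd H]]. exists d; split; auto.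
    intros t' Ht' Htt. eapply Rle_lt_trans. 2: apply (H t' Ht' Htt).
    apply (coord0_le (ssub (hv (xh t')) (hv (xh t)))). apply in_H_sub; apply hp.
  - intros t Ht. generalize (is_RInt_coord 0 0%nat _ _ _ _ (HI t Ht)). simpl. rewrite clamp_id by lra.
    unfold ssub. simpl. auto.
Qed.

Lemma real_to_sol At C R0 T a S0 w Sg : 0 < T -> 0 <= R0 ->
  (forall x y, Rabs (At x - At y) <= C * (1 + Rabs x) * Rabs (x - y)) ->
  path_R T w -> path_R T Sg -> (forall t, 0 <= t <= T -> Rabs (Sg t) <= R0) ->
  (forall t, 0 <= t <= T -> is_RInt (fun v => At (Sg v)) 0 t (Sg t - S0 - a * w t)) ->
  hsol 0 T (G2 At R0) (emb S0) (fun t => emb (a * w (clamp T t))) (fun t => emb (Sg (clamp T t))).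
Proof.
  intros HT HR HC Hw HS HB HI.
  set (xh := fun t => emb (Sg (clamp T t))).
  assert (Hx : hcont 0 T xh) by (apply hcont_emb; auto; lra).
  split; auto. intros t Ht.
  assert (HGc : Gcont 0 T (G2 At R0)).
  { apply (Gcont_of_lip 0 T (G2 At R0 0) (Rabs C * (1 + R0) + 1)).
    generalize (Rabs_pos C); intros; nra.
    intros z z'. apply (G2_lip At C R0 T HR HC 0 z z'). lra. }
  assert (Hex : ex_RInt (V := Hs_CNM 0) (fun v => G2 At R0 (clamp T v) (xh (clamp T v))) 0 t).
  { apply (ex_RInt_clamp (E := Hs_CNM 0) T (fun v => G2 At R0 v (xh v))). lra. apply HGc; auto. }
  set (I := RInt (V := Hs_CNM 0) (fun v => G2 At R0 (clamp T v) (xh (clamp T v))) 0 t).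
  assert (HIc := RInt_correct _ _ _ Hex). fold I in HIc.
  replace (Hsub 0 (Hsub 0 (xh t) (emb S0)) (emb (a * w (clamp T t)))) with I.
  - apply (is_RInt_ext (V := Hs_NM 0) (fun v => G2 At R0 (clamp T v) (xh (clamp T v)))); auto.
    intros v Hv. rewrite Rmin_left, Rmax_right in Hv by lra. rewrite clamp_id by lra. auto.
  - apply Hs_eq. apply functional_extensionality. intros j.
    assert (Hj := is_RInt_coord 0 j _ _ _ _ HIc). destruct j as [|k].
    + simpl in Hj. simpl. unfold ssub. simpl. rewrite !clamp_id by lra.
      eapply is_RInt_R_unique. exact Hj.
      apply (is_RInt_ext (V := R_NormedModule) (fun v => At (Sg v))); auto.
      intros v Hv. rewrite Rmin_left, Rmax_right in Hv by lra. unfold xh. simpl.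
      rewrite (clamp_id T v) by lra. rewrite (clamp_id T v) by lra. rewrite clip_id; auto. apply HB; lra.
    + assert (E0 : hv (Hsub 0 (Hsub 0 (xh t) (emb S0)) (emb (a * w (clamp T t)))) (S k) = 0).
      { unfold xh. simpl. unfold ssub, trunc. destruct (le_lt_dec (S k) 0%nat). lia. ring. }
      rewrite E0. eapply is_RInt_R_unique. exact Hj.
      eapply (is_RInt_ext (V := R_NormedModule) (fun _ => 0)).
      intros v Hv. unfold G2. symmetry. apply emb_S.
      assert (Hz := is_RInt_const (V := R_NormedModule) 0 t 0).
      replace (scal (t - 0) (0 : R_NormedModule)) with 0 in Hz. exact Hz.
      unfold scal; simpl; unfold mult; simpl; ring.
Qed.

Lemma At_growth At C : (forall x y, Rabs (At x - At y) <= C * (1 + Rabs x) * Rabs (x - y)) ->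
  forall y, Rabs (At y) <= Rabs (At 0) + Rabs C * Rabs y.
Proof.
  intros HC y. specialize (HC 0 y). rewrite Rabs_R0, Rplus_0_r, Rmult_1_r, Rminus_0_l, Rabs_Ropp in HC.
  assert (Rabs (At y) <= Rabs (At 0) + Rabs (At 0 - At y)).
  { replace (At y) with (At 0 - (At 0 - At y)) at 1 by ring.
    eapply Rle_trans. apply Rabs_triang. rewrite Rabs_Ropp. lra. }
  assert (C * Rabs y <= Rabs C * Rabs y) by (apply Rmult_le_compat_r; [apply Rabs_pos|apply Rle_abs]). lra.
Qed.

Definition Bnd At C a T S0 W := (Rabs S0 + a * W + Rabs (At 0) * T) * exp ((Rabs C + 1) * T).

Lemma sol2_bound At C a T S0 w W Sg : 0 < T -> 0 <= a -> 0 <= W ->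
  (forall x y, Rabs (At x - At y) <= C * (1 + Rabs x) * Rabs (x - y)) ->
  (forall t, 0 <= t <= T -> Rabs (w t) <= W) ->
  path_R T Sg ->
  (forall t, 0 <= t <= T -> is_RInt (fun v => At (Sg v)) 0 t (Sg t - S0 - a * w t)) ->
  forall t, 0 <= t <= T -> Rabs (Sg t) <= Bnd At C a T S0 W.
Proof.
  intros HT Ha HW HC Hw HS HI t Ht.
  eapply Rle_trans. apply (apriori T At a S0 w W (Rabs (At 0)) (Rabs C) Sg); auto; try apply Rabs_pos.
  apply At_growth; auto.
  unfold Bnd. apply Rmult_le_compat_l.
  generalize (Rabs_pos S0) (Rabs_pos (At 0)); intros; nra.
  destruct (Req_dec t T). subst; lra. left. apply exp_increasing. generalize (Rabs_pos C); intros; nra.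
Qed.

Lemma w_bound T w : 0 < T -> path_R T w -> exists W, 0 <= W /\ forall t, 0 <= t <= T -> Rabs (w t) <= W.
Proof.
  intros HT Hw. destruct (cont_bound (E := R_NormedModule) T w ltac:(lra) Hw) as [W [HW H]].
  exists W; split; auto. intros t Ht. specialize (H t). rewrite clamp_id in H by auto. exact H.
Qed.

Lemma J2_thm (At : R -> R) (C a T : R) : 0 < T -> 0 <= a ->
  (forall x y, Rabs (At x - At y) <= C * (1 + Rabs x) * Rabs (x - y)) ->
  ((forall S0 w, 0 <= S0 -> path_R T w ->
      (exists Sg, is_sol2 At a T S0 w Sg) /\
      (forall Sg Sg', is_sol2 At a T S0 w Sg -> is_sol2 At a T S0 w Sg' ->
                      forall t, 0 <= t <= T -> Sg t = Sg' t)) /\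
   (forall S0 w, 0 <= S0 -> path_R T w ->
      forall eps, 0 < eps -> exists del, 0 < del /\
      forall S0' w', 0 <= S0' -> path_R T w' ->
        Rabs (S0 - S0') < del ->
        (forall t, 0 <= t <= T -> Rabs (w t - w' t) < del) ->
        forall Sg Sg', is_sol2 At a T S0 w Sg -> is_sol2 At a T S0' w' Sg' ->
        forall t, 0 <= t <= T -> Rabs (Sg t - Sg' t) <= eps)).
Proof.
  intros HT Ha HC.
  assert (HBp : forall S0 W, 0 <= W -> 0 <= Bnd At C a T S0 W).
  { intros S0 W HW. unfold Bnd. apply Rmult_le_pos. generalize (Rabs_pos S0) (Rabs_pos (At 0)); intros; nra.
    left; apply exp_pos. }
  assert (HL : forall R0, 0 <= R0 -> 0 < Rabs C * (1 + R0) + 1).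
  { intros. generalize (Rabs_pos C); intros; nra. }
  split.
  - intros S0 w _ Hw. destruct (w_bound T w HT Hw) as [W [HW HWb]].
    set (R0 := Bnd At C a T S0 W + 1).
    assert (HR0 : 0 <= R0) by (unfold R0; generalize (HBp S0 W HW); lra).
    split.
    + destruct (hsol_exists 0 T (G2 At R0) (Rabs C * (1 + R0) + 1) (emb S0) (fun t => emb (a * w (clamp T t))))
        as [xh Hxh]; auto.
      * apply G2_lip; auto.
      * apply (Gcont_of_lip 0 T (G2 At R0 0) (Rabs C * (1 + R0) + 1)). generalize (HL R0 HR0); lra.
        intros z z'. apply (G2_lip At C R0 T HR0 HC 0 z z'). lra.
      * apply (hcont_emb T (fun s => a * w s)). lra. apply path_R_scal; auto.
      * destruct (sol_to_real At R0 T a S0 w xh HT Hxh) as [HS HI].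
        set (Sg := fun t => hv (xh t) 0%nat) in *.
        assert (HB : forall t, 0 <= t <= T -> Rabs (Sg t) <= Bnd At C a T S0 W).
        { intros t Ht. eapply Rle_trans.
          apply (apriori T (fun y => At (clip R0 y)) a S0 w W (Rabs (At 0)) (Rabs C) Sg); auto; try apply Rabs_pos.
          intros y. eapply Rle_trans. apply At_growth; eauto.
          apply Rplus_le_compat_l. apply Rmult_le_compat_l. apply Rabs_pos. apply clip_abs; auto.
          unfold Bnd. apply Rmult_le_compat_l.
          generalize (Rabs_pos S0) (Rabs_pos (At 0)); intros; nra.
          destruct (Req_dec t T). subst; lra. left. apply exp_increasing. generalize (Rabs_pos C); intros; nra. }
        exists Sg. split; auto. intros t Ht.
        apply (is_RInt_ext (V := R_NormedModule) (fun v => At (clip R0 (Sg v)))); auto.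
        intros v Hv. rewrite Rmin_left, Rmax_right in Hv by lra. rewrite clip_id; auto.
        unfold R0. generalize (HB v ltac:(lra)); lra.
    + intros Sg Sg' [HS HI] [HS' HI'] t Ht.
      assert (HB := sol2_bound At C a T S0 w W Sg HT Ha HW HC HWb HS HI).
      assert (HB' := sol2_bound At C a T S0 w W Sg' HT Ha HW HC HWb HS' HI').
      assert (H1 := real_to_sol At C R0 T a S0 w Sg HT HR0 HC Hw HS ltac:(intros; unfold R0; generalize (HB t0 H); lra) HI).
      assert (H2 := real_to_sol At C R0 T a S0 w Sg' HT HR0 HC Hw HS' ltac:(intros; unfold R0; generalize (HB' t0 H); lra) HI').
      assert (Hd := hsol_dep 0 T (G2 At R0) (Rabs C * (1 + R0) + 1) _ _ _ _ _ _ 0 HT (HL R0 HR0) ltac:(lra)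
                     (G2_lip At C R0 T HR0 HC) H1 H2).
      specialize (Hd ltac:(intros; rewrite normH_ssub_self; lra) t Ht).
      rewrite !normH_emb, Rminus_diag, Rabs_R0, Rplus_0_l, Rmult_0_l in Hd.
      rewrite clamp_id in Hd by auto. apply Rabs_le_between in Hd. lra.
  - intros S0 w _ Hw eps Heps. destruct (w_bound T w HT Hw) as [W [HW HWb]].
    set (B := Bnd At C a T (Rabs S0 + 1) (W + 1)).
    set (R0 := B + 1).
    assert (HR0 : 0 <= R0) by (unfold R0, B; generalize (HBp (Rabs S0 + 1) (W + 1) ltac:(lra)); lra).
    set (L := Rabs C * (1 + R0) + 1).
    assert (HLp : 0 < L) by (apply HL; auto).
    assert (HE : 0 < (1 + a) * exp (L * T)) by (apply Rmult_lt_0_compat; [lra|apply exp_pos]).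
    exists (Rmin 1 (eps / ((1 + a) * exp (L * T)))). split.
    { apply Rmin_pos. lra. apply Rdiv_lt_0_compat; auto. }
    intros S0' w' _ Hw' HS0 Hww Sg Sg' [HS HI] [HS' HI'] t Ht.
    set (del := Rmin 1 (eps / ((1 + a) * exp (L * T)))) in *.
    assert (Hd1 : del <= 1) by apply Rmin_l.
    assert (Hd2 : del <= eps / ((1 + a) * exp (L * T))) by apply Rmin_r.
    assert (HBmono : forall s0 W', Rabs s0 <= Rabs S0 + 1 -> 0 <= W' <= W + 1 -> Bnd At C a T s0 W' <= B).
    { intros s0 W' H1 H2. unfold B, Bnd. apply Rmult_le_compat_r. left; apply exp_pos.
      rewrite (Rabs_pos_eq (Rabs S0 + 1)) by (generalize (Rabs_pos S0); lra). nra. }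
    assert (HB := sol2_bound At C a T S0 w W Sg HT Ha HW HC HWb HS HI).
    assert (HWb' : forall t, 0 <= t <= T -> Rabs (w' t) <= W + 1).
    { intros s Hs. specialize (Hww s Hs). specialize (HWb s Hs).
      replace (w' s) with (w s - (w s - w' s)) by ring. eapply Rle_trans. apply Rabs_triang. rewrite Rabs_Ropp. lra. }
    assert (HB' := sol2_bound At C a T S0' w' (W + 1) Sg' HT Ha ltac:(lra) HC HWb' HS' HI').
    assert (HS0' : Rabs S0' <= Rabs S0 + 1).
    { replace S0' with (S0 - (S0 - S0')) by ring. eapply Rle_trans. apply Rabs_triang. rewrite Rabs_Ropp. lra. }
    assert (H1 := real_to_sol At C R0 T a S0 w Sg HT HR0 HC Hw HS
        ltac:(intros s Hs; unfold R0; generalize (HB s Hs) (HBmono S0 W ltac:(lra) ltac:(lra)); lra) HI).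
    assert (H2 := real_to_sol At C R0 T a S0' w' Sg' HT HR0 HC Hw' HS'
        ltac:(intros s Hs; unfold R0; generalize (HB' s Hs) (HBmono S0' (W + 1) HS0' ltac:(lra)); lra) HI').
    assert (Hd := hsol_dep 0 T (G2 At R0) L _ _ _ _ _ _ (a * del) HT HLp ltac:(generalize (Rmin_pos 1 (eps / ((1 + a) * exp (L * T))) ltac:(lra) ltac:(apply Rdiv_lt_0_compat; auto)); fold del; nra)
                     (G2_lip At C R0 T HR0 HC) H1 H2).
    specialize (Hd ltac:(intros s Hs; cbv beta; rewrite normH_emb, clamp_id by auto;
       replace (a * w s - a * w' s) with (a * (w s - w' s)) by ring; rewrite Rabs_mult, Rabs_pos_eq by auto;
       apply Rmult_le_compat_l; auto; left; apply Hww; auto) t Ht).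
    rewrite !normH_emb in Hd. rewrite clamp_id in Hd by auto.
    eapply Rle_trans. exact Hd.
    assert (exp (L * t) <= exp (L * T)).
    { destruct (Req_dec t T). subst; lra. left. apply exp_increasing. nra. }
    assert (Rabs (S0 - S0') + a * del <= (1 + a) * del) by nra.
    apply Rle_trans with ((1 + a) * del * exp (L * T)).
    { apply Rmult_le_compat; auto. generalize (Rabs_pos (S0 - S0')); nra. left; apply exp_pos. }
    apply Rle_trans with ((1 + a) * (eps / ((1 + a) * exp (L * T))) * exp (L * T)).
    { apply Rmult_le_compat_r. left; apply exp_pos. apply Rmult_le_compat_l; lra. }
    right. field. split; [apply Rgt_not_eq, exp_pos| lra].
Qed.

Lemma Rpower_sq x e : 0 < x -> Rpower x e ^ 2 = Rpower x (2 * e).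
Proof. intros. replace (2 * e) with (e + e) by ring. rewrite Rpower_plus. ring. Qed.

Lemma Cop_bound s kappa lam c2 : 0 <= s -> s <= kappa -> 0 < c2 ->
  (forall j, 0 <= lam j <= c2 * Rpower (INR j + 1) (- kappa)) ->
  forall y, in_H (- s) y -> in_H s (Cop lam y) /\ normH s (Cop lam y) <= c2 ^ 2 * normH (- s) y.
Proof.
  intros Hs Hk Hc2 Hl y Hy.
  assert (Hterm : forall j, 0 <= wt s j * (Cop lam y j) ^ 2 <= c2 ^ 4 * (wt (- s) j * y j ^ 2)).
  { intros j. split. apply (sq_nn s (Cop lam y) j).
    unfold Cop. assert (Hj : 0 < INR j + 1) by (generalize (pos_INR j); lra).
    assert (Hj1 : 1 <= INR j + 1) by (generalize (pos_INR j); lra).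
    specialize (Hl j). destruct Hl as [Hl0 Hl1].
    assert (H4 : lam j ^ 4 <= c2 ^ 4 * Rpower (INR j + 1) (- 4 * kappa)).
    { replace (- 4 * kappa) with (2 * (2 * - kappa)) by ring. rewrite <- !Rpower_sq by auto.
      replace (lam j ^ 4) with ((lam j ^ 2) ^ 2) by ring. replace (c2 ^ 4) with ((c2 ^ 2) ^ 2) by ring.
      rewrite <- Rpow_mult_distr. apply pow_incr. split. apply pow2_ge_0.
      rewrite <- Rpow_mult_distr. apply pow_incr. lra. }
    assert (Hw : wt s j * Rpower (INR j + 1) (- 4 * kappa) <= wt (- s) j).
    { unfold wt. rewrite <- Rpower_plus. apply Rle_Rpower; auto. lra. }
    replace (wt s j * (lam j ^ 2 * y j) ^ 2) with (wt s j * lam j ^ 4 * y j ^ 2) by ring.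
    assert (0 <= y j ^ 2) by apply pow2_ge_0. assert (0 < wt s j) by apply wt_pos.
    assert (wt s j * lam j ^ 4 <= c2 ^ 4 * wt (- s) j).
    { apply Rle_trans with (wt s j * (c2 ^ 4 * Rpower (INR j + 1) (- 4 * kappa))).
      apply Rmult_le_compat_l; lra. replace (wt s j * (c2 ^ 4 * Rpower (INR j + 1) (- 4 * kappa))) with
        (c2 ^ 4 * (wt s j * Rpower (INR j + 1) (- 4 * kappa))) by ring.
      apply Rmult_le_compat_l. apply pow_le; lra. auto. }
    replace (c2 ^ 4 * (wt (- s) j * y j ^ 2)) with (c2 ^ 4 * wt (- s) j * y j ^ 2) by ring.
    apply Rmult_le_compat_r; auto. }
  destruct (Series_le_gen _ _ Hterm (exs_scal (c2 ^ 4) _ Hy)) as [He Hle].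
  split. exact He.
  unfold normH. rewrite Series_scal_l in Hle.
  rewrite <- (sqrt_pow2 (c2 ^ 2)) by (apply pow_le; lra). rewrite <- sqrt_mult_alt by (apply pow_le; apply pow_le; lra).
  apply sqrt_le_1_alt. replace ((c2 ^ 2) ^ 2) with (c2 ^ 4) by ring. exact Hle.
Qed.

Lemma grad_local s (g : seqR -> seqR) (H : seqR -> seqR -> seqR) K :
  (forall x, in_H s x -> in_H (- s) (g x)) ->
  (forall x h, in_H s x -> in_H s h -> in_H (- s) (H x h)) ->
  (forall x, in_H s x -> forall eps, 0 < eps -> exists del, 0 < del /\
     forall h, in_H s h -> normH s h < del ->
       normH (- s) (ssub (ssub (g (sadd x h)) (g x)) (H x h)) <= eps * normH s h) ->
  (forall x h, in_H s x -> in_H s h -> normH (- s) (H x h) <= K * normH s h) ->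
  forall p, in_H s p -> exists del, 0 < del /\ forall k, in_H s k -> normH s k < del ->
    normH (- s) (ssub (g (sadd p k)) (g p)) <= (Rabs K + / 2) * normH s k.
Proof.
  intros Hg Hh HF HK p Hp. destruct (HF p Hp (/ 2) ltac:(lra)) as [d [Hd Hd']].
  exists d; split; auto. intros k Hk Hkd. specialize (Hd' k Hk Hkd).
  replace (ssub (g (sadd p k)) (g p)) with (sadd (ssub (ssub (g (sadd p k)) (g p)) (H p k)) (H p k)).
  2: apply functional_extensionality; intros; unfold sadd, ssub; ring.
  assert (Hpk : in_H s (sadd p k)) by (apply in_H_add; auto).
  eapply Rle_trans. apply normH_triangle. apply in_H_sub. apply in_H_sub; apply Hg; auto. apply Hh; auto.
  apply Hh; auto. specialize (HK p k Hp Hk).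
  assert (K * normH s k <= Rabs K * normH s k) by (apply Rmult_le_compat_r; [apply normH_nn|apply Rle_abs]). lra.
Qed.

Lemma normH_rev2 r a b c : in_H r a -> in_H r b -> in_H r c ->
  Rabs (normH r (ssub a c) - normH r (ssub b c)) <= normH r (ssub a b).
Proof.
  intros. eapply Rle_trans. apply normH_rev; apply in_H_sub; auto.
  replace (ssub (ssub a c) (ssub b c)) with (ssub a b). lra.
  apply functional_extensionality; intros; unfold ssub; ring.
Qed.

Lemma grad_lip s (g : seqR -> seqR) (H : seqR -> seqR -> seqR) K :
  (forall x, in_H s x -> in_H (- s) (g x)) ->
  (forall x h, in_H s x -> in_H s h -> in_H (- s) (H x h)) ->
  (forall x, in_H s x -> forall eps, 0 < eps -> exists del, 0 < del /\
     forall h, in_H s h -> normH s h < del ->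
       normH (- s) (ssub (ssub (g (sadd x h)) (g x)) (H x h)) <= eps * normH s h) ->
  (forall x h, in_H s x -> in_H s h -> normH (- s) (H x h) <= K * normH s h) ->
  forall x y, in_H s x -> in_H s y -> normH (- s) (ssub (g x) (g y)) <= (Rabs K + 1) * normH s (ssub x y).
Proof.
  intros Hg Hh HF HK x y Hx Hy.
  assert (Hloc := grad_local s g H K Hg Hh HF HK).
  set (h := ssub x y). assert (Hh' : in_H s h) by (apply in_H_sub; auto).
  set (nh := normH s h).
  assert (Hnh : 0 <= nh) by apply normH_nn.
  destruct (Req_dec nh 0) as [H0|Hpos].
  { assert (x = y). { apply functional_extensionality; intros j. generalize (normH_zero s h Hh' H0 j). unfold h, ssub. lra. }
    subst. rewrite normH_ssub_self. fold h nh. rewrite H0. lra. }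
  assert (Hnh' : 0 < nh) by lra.
  set (p := fun t => sadd y (sscal t h)).
  assert (Hp : forall t, in_H s (p t)) by (intros; apply in_H_add; auto; apply in_H_scal; auto).
  assert (Hpshift : forall t t', p t' = sadd (p t) (sscal (t' - t) h)).
  { intros. apply functional_extensionality; intros; unfold p, sadd, sscal; ring. }
  assert (Hnsc : forall c, normH s (sscal c h) = Rabs c * nh) by (intros; apply normH_scal).
  set (Kp := Rabs K + 1).
  assert (HKp : 1 <= Kp) by (unfold Kp; generalize (Rabs_pos K); lra).
  assert (Heps : forall eps, 0 < eps -> normH (- s) (ssub (g (p 1)) (g y)) <= Kp * 1 * nh + eps).
  { intros eps He.
    set (f := fun t => normH (- s) (ssub (g (p t)) (g y)) - Kp * t * nh - eps).
    assert (Hc : path_R 1 f).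
    { intros t Ht e He'.
      destruct (Hloc (p t) (Hp t)) as [d [Hd Hd']].
      exists (Rmin (d / nh) (e / ((2 * Kp + 1) * nh))). split.
      { apply Rmin_pos; apply Rdiv_lt_0_compat; auto. nra. }
      intros t' Ht' Htt.
      assert (Ht1 : Rabs (t' - t) * nh < d).
      { apply Rlt_le_trans with (d / nh * nh). apply Rmult_lt_compat_r; auto. eapply Rlt_le_trans; [exact Htt|apply Rmin_l].
        right; field; lra. }
      assert (Ht2 : Rabs (t' - t) * ((2 * Kp + 1) * nh) < e).
      { apply Rlt_le_trans with (e / ((2 * Kp + 1) * nh) * ((2 * Kp + 1) * nh)).
        apply Rmult_lt_compat_r. nra. eapply Rlt_le_trans; [exact Htt|apply Rmin_r].
        right; field; nra. }
      assert (Hb : normH (- s) (ssub (g (p t')) (g (p t))) <= (Rabs K + / 2) * (Rabs (t' - t) * nh)).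
      { rewrite (Hpshift t t'). rewrite <- Hnsc. apply Hd'. apply in_H_scal; auto. rewrite Hnsc. auto. }
      unfold f. replace (normH (- s) (ssub (g (p t')) (g y)) - Kp * t' * nh - eps -
        (normH (- s) (ssub (g (p t)) (g y)) - Kp * t * nh - eps)) with
        ((normH (- s) (ssub (g (p t')) (g y)) - normH (- s) (ssub (g (p t)) (g y))) - Kp * nh * (t' - t)) by ring.
      eapply Rle_lt_trans. apply Rabs_triang. rewrite Rabs_Ropp.
      assert (Hr := normH_rev2 (- s) (g (p t')) (g (p t)) (g y) (Hg _ (Hp t')) (Hg _ (Hp t)) (Hg _ Hy)).
      rewrite Rabs_mult, Rabs_mult, (Rabs_pos_eq Kp), (Rabs_pos_eq nh) by lra.
      assert (0 <= Rabs (t' - t)) by apply Rabs_pos.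
      assert (Rabs K + / 2 <= Kp) by (unfold Kp; lra).
      assert ((Rabs K + / 2) * (Rabs (t' - t) * nh) <= Kp * (Rabs (t' - t) * nh)).
      { apply Rmult_le_compat_r. nra. auto. }
      nra. }
    assert (Hf := cont_ind 1 f ltac:(lra) Hc).
    enough (f 1 <= 0) by (unfold f in *; lra).
    apply Hf; [|lra].
    intros tau Htau Hbel.
    destruct (Req_dec tau 0) as [Ht0|Ht0].
    { subst tau. unfold f. replace (p 0) with y. rewrite normH_ssub_self. nra.
      apply functional_extensionality; intros; unfold p, sadd, sscal; ring. }
    destruct (Hloc (p tau) (Hp tau)) as [d [Hd Hd']].
    set (sv := Rmax 0 (tau - d / (2 * nh))).
    assert (Hsv : 0 <= sv < tau).
    { assert (0 < d / (2 * nh)) by (apply Rdiv_lt_0_compat; lra).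
      unfold sv, Rmax. destruct Rle_dec; split; lra. }
    assert (Hsv2 : (tau - sv) * nh < d).
    { unfold sv, Rmax. destruct Rle_dec.
      - replace ((tau - (tau - d / (2 * nh))) * nh) with (d / 2) by (field; lra). lra.
      - assert (tau <= d / (2 * nh)) by lra.
        apply Rle_lt_trans with (d / (2 * nh) * nh). replace (tau - 0) with tau by ring. apply Rmult_le_compat_r; lra.
        replace (d / (2 * nh) * nh) with (d / 2) by (field; lra). lra. }
    specialize (Hbel sv Hsv). unfold f in Hbel |- *.
    assert (Hb : normH (- s) (ssub (g (p sv)) (g (p tau))) <= (Rabs K + / 2) * ((tau - sv) * nh)).
    { rewrite (Hpshift tau sv). replace ((tau - sv) * nh) with (Rabs (sv - tau) * nh).
      rewrite <- Hnsc. apply Hd'. apply in_H_scal; auto. rewrite Hnsc.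
      rewrite Rabs_left by lra. replace (- (sv - tau)) with (tau - sv) by ring. auto.
      rewrite Rabs_left by lra. ring. }
    assert (Htri : normH (- s) (ssub (g (p tau)) (g y)) <= normH (- s) (ssub (g (p tau)) (g (p sv))) + normH (- s) (ssub (g (p sv)) (g y))).
    { apply normH_ssub_tri; apply Hg; auto. }
    rewrite (normH_ssub_sym (- s) (g (p tau)) (g (p sv))) in Htri.
    assert (HX : 0 < (tau - sv) * nh) by nra.
    set (X := (tau - sv) * nh) in *.
    assert (E1 : Kp * tau * nh = Kp * sv * nh + Kp * X) by (unfold X; ring).
    assert (E2 : (Rabs K + / 2) * X = Kp * X - X / 2) by (unfold Kp; field).
    lra. }
  replace (p 1) with x in Heps.
  2:{ apply functional_extensionality; intros; unfold p, sadd, sscal, h, ssub; ring. }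
  fold h nh. apply Rnot_lt_le. intros Hlt.
  specialize (Heps ((normH (- s) (ssub (g x) (g y)) - Kp * nh) / 2)). 
  assert (0 < (normH (- s) (ssub (g x) (g y)) - Kp * nh) / 2) by (unfold Kp in *; lra).
  specialize (Heps H0). unfold Kp in *. lra.
Qed.

Lemma exp_mono x y : x <= y -> exp x <= exp y.
Proof. intros [H|H]. left; apply exp_increasing; auto. subst; lra. Qed.

Definition gfun (u : R) : R := exp (- u ^ 2 / 2) / sqrt (2 * PI).

Lemma sqrt2PI : 1 <= sqrt (2 * PI).
Proof. rewrite <- sqrt_1. apply sqrt_le_1_alt. generalize PI2_1; lra. Qed.

Lemma gfun_cont u : continuity_pt gfun u.
Proof.
  unfold gfun. apply continuity_pt_div. 2: apply continuity_pt_const; intros ?; auto.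
  2: generalize sqrt2PI; lra.
  apply (continuity_pt_comp (fun u => - u ^ 2 / 2) exp). 
  apply derivable_continuous_pt. unfold Rdiv. apply derivable_pt_mult. apply derivable_pt_opp. apply derivable_pt_pow.
  apply derivable_pt_const. apply derivable_continuous_pt, derivable_pt_exp.
Qed.

Lemma gfun_cont' u : continuous gfun u.
Proof. apply continuity_pt_filterlim, gfun_cont. Qed.

Lemma gfun_bounds u : 0 <= gfun u <= 1 /\ gfun u <= exp (/ 2) * exp u /\ gfun u <= exp (/ 2) * exp (- u).
Proof.
  unfold gfun. assert (Hs := sqrt2PI).
  assert (H0 : 0 < exp (- u ^ 2 / 2)) by apply exp_pos.
  assert (Hle : exp (- u ^ 2 / 2) / sqrt (2 * PI) <= exp (- u ^ 2 / 2)).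
  { unfold Rdiv. rewrite <- (Rmult_1_r (exp _)) at 2. apply Rmult_le_compat_l. lra.
    rewrite <- Rinv_1. apply Rinv_le_contravar; lra. }
  repeat split.
  - apply Rlt_le, Rdiv_lt_0_compat; lra.
  - eapply Rle_trans. exact Hle. rewrite <- exp_0. apply exp_mono. generalize (pow2_ge_0 u); lra.
  - eapply Rle_trans. exact Hle. rewrite <- exp_plus. apply exp_mono. generalize (pow2_ge_0 (u + 1)); simpl; nra.
  - eapply Rle_trans. exact Hle. rewrite <- exp_plus. apply exp_mono. generalize (pow2_ge_0 (u - 1)); simpl; nra.
Qed.

Lemma ex_gfun a b : ex_RInt gfun a b.
Proof. apply (ex_RInt_continuous (V := R_CompleteNormedModule)). intros; apply gfun_cont'. Qed.

Definition Gint (a b : R) : R := RInt gfun a b.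

Lemma Gint_chasles a b c : Gint a b + Gint b c = Gint a c.
Proof. unfold Gint. apply (RInt_Chasles (V := R_CompleteNormedModule)); apply ex_gfun. Qed.

Lemma Gint_nn a b : a <= b -> 0 <= Gint a b.
Proof. intros. apply RInt_ge_0; auto. apply ex_gfun. intros; apply gfun_bounds. Qed.

Lemma RInt_exp_ab (c L a b : R) : L <> 0 ->
  RInt (fun v => c * exp (L * v)) a b = c / L * (exp (L * b) - exp (L * a)).
Proof.
  intros HL. apply (is_RInt_unique (V := R_CompleteNormedModule)).
  replace (c / L * (exp (L * b) - exp (L * a))) with (minus (c / L * exp (L * b)) (c / L * exp (L * a))).
  2:{ unfold minus, plus, opp; simpl. ring. }
  apply (is_RInt_derive (fun v => c / L * exp (L * v))).
  - intros x _. auto_derive; auto. field. auto.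
  - intros x _. apply continuity_pt_filterlim. apply derivable_continuous_pt.
    apply derivable_pt_mult. apply derivable_pt_const.
    apply (derivable_pt_comp (fun v => L * v) exp).
    apply derivable_pt_scal. apply derivable_pt_id. apply derivable_pt_exp.
Qed.

Lemma ex_cexp c L a b : ex_RInt (fun v => c * exp (L * v)) a b.
Proof.
  apply (ex_RInt_continuous (V := R_CompleteNormedModule)). intros z _. apply continuity_pt_filterlim.
  apply derivable_continuous_pt. apply derivable_pt_mult. apply derivable_pt_const.
  apply (derivable_pt_comp (fun v => L * v) exp).
  apply derivable_pt_scal. apply derivable_pt_id. apply derivable_pt_exp.
Qed.

Definition Kg := exp (/ 2).

Lemma Gint_left a b : a <= b -> Gint a b <= Kg * exp b.
Proof.
  intros Hab. unfold Gint.
  apply Rle_trans with (RInt (fun v => Kg * exp (1 * v)) a b).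
  - apply RInt_le; auto. apply ex_gfun. apply ex_cexp. intros x _. rewrite Rmult_1_l. apply gfun_bounds.
  - rewrite RInt_exp_ab by lra. rewrite !Rmult_1_l. unfold Rdiv. rewrite Rinv_1, Rmult_1_r.
    assert (0 < exp a) by apply exp_pos. assert (0 < Kg) by apply exp_pos. nra.
Qed.

Lemma Gint_right a b : 0 <= a <= b -> Gint a b <= Kg.
Proof.
  intros Hab. unfold Gint.
  apply Rle_trans with (RInt (fun v => Kg * exp (-1 * v)) a b).
  - apply RInt_le; try lra. apply ex_gfun. apply ex_cexp. intros x _.
    replace (-1 * x) with (- x) by ring. apply gfun_bounds.
  - rewrite RInt_exp_ab by lra.
    assert (0 < exp (-1 * b)) by apply exp_pos. assert (exp (-1 * a) <= 1).
    { rewrite <- exp_0. apply exp_mono. lra. }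
    assert (0 < Kg) by apply exp_pos.
    replace (Kg / -1 * (exp (-1 * b) - exp (-1 * a))) with (Kg * (exp (-1 * a) - exp (-1 * b))) by (field).
    nra.
Qed.

Definition Lset (z : R) : R -> Prop := fun y => exists a, a <= z /\ y = Gint a z.

Definition Lz (z : R) : R.
Proof.
  destruct (completeness (Lset z)) as [m _].
  - exists (Kg * exp z). intros y [a [Ha ->]]. apply Gint_left; auto.
  - exists (Gint z z). exists z. split; auto; lra.
  - exact m.
Defined.

Lemma Lz_tail z a : a <= z -> Gint a z <= Lz z <= Gint a z + Kg * exp a.
Proof.
  intros Ha. unfold Lz. destruct completeness as [m [Hub Hlub]]. split.
  - apply Hub. exists a; split; auto.
  - apply Hlub. intros y [a' [Ha' ->]].
    destruct (Rle_lt_dec a' a).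
    + rewrite <- (Gint_chasles a' a z). generalize (Gint_left a' a r). lra.
    + rewrite <- (Gint_chasles a a' z). generalize (Gint_nn a a' ltac:(lra)). intros.
      assert (0 < Kg * exp a) by (apply Rmult_lt_0_compat; apply exp_pos). lra.
Qed.

Lemma small_exp eps : 0 < eps -> exists M, forall a, a < M -> Kg * exp a < eps.
Proof.
  intros He. exists (ln (eps / Kg)). intros a Ha.
  assert (HK : 0 < Kg) by apply exp_pos.
  apply exp_increasing in Ha. rewrite exp_ln in Ha by (apply Rdiv_lt_0_compat; auto).
  apply Rmult_lt_reg_l with (/ Kg). apply Rinv_0_lt_compat; auto.
  rewrite <- Rmult_assoc, Rinv_l, Rmult_1_l by lra. rewrite Rmult_comm. exact Ha.
Qed.

Lemma Phi_is z : is_RInt_gen gfun (Rbar_locally m_infty) (at_point z) (Lz z).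
Proof.
  intros P [eps HP]. destruct (small_exp eps (cond_pos eps)) as [M HM].
  apply (Filter_prod _ _ _ (fun a => a < Rmin M z) (fun b => b = z)).
  - exists (Rmin M z). auto.
  - reflexivity.
  - intros a b Ha Hb. subst b. exists (Gint a z). split.
    + apply (RInt_correct (V := R_CompleteNormedModule)). apply ex_gfun.
    + apply HP. assert (a <= z) by (generalize (Rmin_r M z); lra).
      destruct (Lz_tail z a H). specialize (HM a (Rlt_le_trans _ _ _ Ha (Rmin_l _ _))).
      change (Rabs (Gint a z - Lz z) < eps). rewrite Rabs_left1 by lra. lra.
Qed.

Lemma Phi_eq z : Phi z = Lz z.
Proof.
  unfold Phi. apply (is_RInt_gen_unique (V := R_CompleteNormedModule)). apply Phi_is.
Qed.

Lemma Phi_diff z1 z2 : Phi z2 = Phi z1 + Gint z1 z2.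
Proof.
  rewrite !Phi_eq.
  set (d := Rabs (Lz z2 - Lz z1 - Gint z1 z2)).
  assert (Hd : forall a, a <= Rmin z1 z2 -> d <= Kg * exp a).
  { intros a Ha. assert (H1 := Lz_tail z1 a ltac:(generalize (Rmin_l z1 z2); lra)).
    assert (H2 := Lz_tail z2 a ltac:(generalize (Rmin_r z1 z2); lra)).
    rewrite <- (Gint_chasles a z1 z2) in H2. unfold d. apply Rabs_le. lra. }
  destruct (Req_dec d 0) as [H0|H0].
  - unfold d in H0. apply Rabs_eq_0 in H0. lra.
  - assert (Hdp : 0 < d) by (unfold d in *; generalize (Rabs_pos (Lz z2 - Lz z1 - Gint z1 z2)); lra).
    destruct (small_exp d Hdp) as [M HM].
    set (a := Rmin (M - 1) (Rmin z1 z2)).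
    specialize (Hd a (Rmin_r _ _)). specialize (HM a ltac:(unfold a; generalize (Rmin_l (M - 1) (Rmin z1 z2)); lra)). lra.
Qed.

Lemma Phi_lip z1 z2 : Rabs (Phi z2 - Phi z1) <= Rabs (z2 - z1).
Proof.
  rewrite (Phi_diff z1 z2). replace (Phi z1 + Gint z1 z2 - Phi z1) with (Gint z1 z2) by ring.
  assert (E : Gint z1 z2 = Gint 0 z2 - Gint 0 z1) by (rewrite <- (Gint_chasles 0 z1 z2); ring).
  rewrite E.
  assert (H := RInt_lip (E := R_CompleteNormedModule) gfun 1 z1 z2 gfun_cont' ltac:(intros v; change (Rabs (gfun v) <= 1); rewrite Rabs_pos_eq; apply gfun_bounds)).
  change (Rabs (Gint 0 z2 - Gint 0 z1) <= 1 * Rabs (z2 - z1)) in H. lra.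
Qed.

Lemma Phi_mono z1 z2 : z1 <= z2 -> Phi z1 <= Phi z2.
Proof. intros. rewrite (Phi_diff z1 z2). generalize (Gint_nn z1 z2 H). lra. Qed.

Lemma Phi_ub z : Phi z <= Phi 0 + Kg.
Proof.
  destruct (Rle_lt_dec 0 z).
  - rewrite (Phi_diff 0 z). generalize (Gint_right 0 z ltac:(lra)). lra.
  - generalize (Phi_mono z 0 ltac:(lra)). assert (0 < Kg) by apply exp_pos. lra.
Qed.

Definition Pinf : R.
Proof.
  destruct (completeness (fun y => exists z, y = Phi z)) as [m _].
  - exists (Phi 0 + Kg). intros y [z ->]. apply Phi_ub.
  - exists (Phi 0). exists 0. auto.
  - exact m.
Defined.

Lemma Pinf_ge z : Phi z <= Pinf.
Proof. unfold Pinf. destruct completeness as [m [Hub _]]. apply Hub. exists z; auto. Qed.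

Lemma Pinf_tail eps : 0 < eps -> exists z0, forall z, z0 <= z -> Pinf - eps < Phi z.
Proof.
  intros He. unfold Pinf. destruct completeness as [m [Hub Hlub]].
  destruct (classic (exists z0, m - eps < Phi z0)) as [[z0 Hz0]|Hn].
  - exists z0. intros z Hz. generalize (Phi_mono z0 z Hz). lra.
  - exfalso. assert (m <= m - eps); [|lra]. apply Hlub. intros y [z ->]. apply Rnot_lt_le. intros Hlt.
    apply Hn. exists z. auto.
Qed.

Definition CP (f : R -> R) (x0 : R) : Prop :=
  forall eps, 0 < eps -> exists del, 0 < del /\ forall x, Rabs (x - x0) < del -> Rabs (f x - f x0) < eps.

Lemma CP_of_derive f x0 : ex_derive f x0 -> CP f x0.
Proof.
  intros H eps He. apply ex_derive_continuous in H. apply continuity_pt_filterlim in H.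
  destruct (H eps He) as [d [Hd Hd']]. exists d; split; auto. intros x Hx.
  destruct (Req_dec x x0). subst. rewrite Rminus_diag, Rabs_R0; auto.
  apply Hd'. split. split. exact I. auto. exact Hx.
Qed.

Lemma CP_comp f g x0 : CP f x0 -> CP g (f x0) -> CP (fun x => g (f x)) x0.
Proof.
  intros Hf Hg eps He. destruct (Hg eps He) as [d1 [Hd1 H1]]. destruct (Hf d1 Hd1) as [d2 [Hd2 H2]].
  exists d2; split; auto.
Qed.

Lemma CP_mul f g x0 : CP f x0 -> CP g x0 -> CP (fun x => f x * g x) x0.
Proof.
  intros Hf Hg eps He.
  set (A := Rabs (f x0) + 1). set (B := Rabs (g x0) + 1).
  assert (HA : 0 < A) by (unfold A; generalize (Rabs_pos (f x0)); lra).
  assert (HB : 0 < B) by (unfold B; generalize (Rabs_pos (g x0)); lra).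
  destruct (Hf (eps / (2 * B))) as [d1 [Hd1 H1]]. apply Rdiv_lt_0_compat; lra.
  destruct (Hg (Rmin 1 (eps / (2 * A)))) as [d2 [Hd2 H2]]. apply Rmin_pos. lra. apply Rdiv_lt_0_compat; lra.
  exists (Rmin d1 d2). split. apply Rmin_pos; auto. intros x Hx.
  specialize (H1 x (Rlt_le_trans _ _ _ Hx (Rmin_l _ _))). specialize (H2 x (Rlt_le_trans _ _ _ Hx (Rmin_r _ _))).
  assert (H2a := Rlt_le_trans _ _ _ H2 (Rmin_l _ _)). assert (H2b := Rlt_le_trans _ _ _ H2 (Rmin_r _ _)).
  replace (f x * g x - f x0 * g x0) with ((f x - f x0) * g x + f x0 * (g x - g x0)) by ring.
  eapply Rle_lt_trans. apply Rabs_triang. rewrite !Rabs_mult.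
  assert (Hgx : Rabs (g x) <= B).
  { unfold B. replace (g x) with (g x0 + (g x - g x0)) by ring. eapply Rle_trans. apply Rabs_triang. lra. }
  assert (T1 : Rabs (f x - f x0) * Rabs (g x) <= eps / (2 * B) * B).
  { apply Rmult_le_compat; try apply Rabs_pos; lra. }
  assert (T2 : Rabs (f x0) * Rabs (g x - g x0) <= A * (eps / (2 * A))).
  { apply Rmult_le_compat; try apply Rabs_pos. unfold A; lra. lra. }
  replace (eps / (2 * B) * B) with (eps / 2) in T1 by (field; lra).
  replace (A * (eps / (2 * A))) with (eps / 2) in T2 by (field; lra).
  assert (Rabs (f x0) * Rabs (g x - g x0) < eps / 2 \/ Rabs (f x - f x0) * Rabs (g x) < eps / 2).
  { destruct (Req_dec (Rabs (g x - g x0)) 0).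
    - left. rewrite H, Rmult_0_r. lra.
    - left. apply Rlt_le_trans with (A * Rabs (g x - g x0)).
      apply Rmult_lt_compat_r. generalize (Rabs_pos (g x - g x0)); lra. unfold A; lra.
      apply Rle_trans with (A * (eps / (2 * A))). apply Rmult_le_compat_l; lra. right; field; lra. }
  destruct H; lra.
Qed.

Lemma CP_Phi z : CP Phi z.
Proof.
  intros eps He. exists eps. split; auto. intros x Hx. eapply Rle_lt_trans. apply Phi_lip. auto.
Qed.

Definition Dt (l x : R) : R := if Rlt_dec 0 x then Dl l x else 2 * l ^ 2 * exp (- l ^ 2) * Pinf.

Definition qD (l x : R) : R := 2 * l ^ 2 * exp (l ^ 2 * (x - 1)) * Phi (l * (1 - 2 * x) / sqrt (2 * x)).

Lemma Dl_pos l x : 0 < x -> Dl l x = qD l x.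
Proof. intros. unfold Dl, qD. destruct Rlt_dec; [auto|lra]. Qed.
Lemma Dt_pos l x : 0 < x -> Dt l x = qD l x.
Proof. intros. unfold Dt. destruct Rlt_dec; [apply Dl_pos; auto|lra]. Qed.
Lemma Dt_0 l : Dt l 0 = 2 * l ^ 2 * exp (- l ^ 2) * Pinf.
Proof. unfold Dt. destruct Rlt_dec; [lra|auto]. Qed.

Lemma qD_CP l x0 : 0 < x0 -> CP (qD l) x0.
Proof.
  intros Hx. unfold qD.
  apply (CP_mul (fun x => 2 * l ^ 2 * exp (l ^ 2 * (x - 1))) (fun x => Phi (l * (1 - 2 * x) / sqrt (2 * x)))).
  - apply CP_of_derive. auto_derive. auto.
  - apply (CP_comp (fun x => l * (1 - 2 * x) / sqrt (2 * x)) Phi). apply CP_of_derive. auto_derive.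
    split. lra. split; auto. apply Rgt_not_eq, sqrt_lt_R0. lra. apply CP_Phi.
Qed.

Lemma Dt_cont0 l : 0 < l -> forall eps, 0 < eps -> exists del, 0 < del /\
  forall x, 0 < x -> x < del -> Rabs (qD l x - Dt l 0) < eps.
Proof.
  intros Hl eps He. rewrite Dt_0.
  set (Pb := Rabs (Phi 0) + Rabs Pinf).
  assert (HPb : 0 <= Pb) by (unfold Pb; generalize (Rabs_pos (Phi 0)) (Rabs_pos Pinf); lra).
  assert (Hl2 : 0 < l ^ 2) by (apply pow_lt; auto).
  set (e1 := eps / (4 * l ^ 2 * (Pb + 1))).
  assert (He1 : 0 < e1) by (unfold e1; apply Rdiv_lt_0_compat; auto; nra).
  destruct (Pinf_tail e1 He1) as [z0 Hz0].
  set (Z := Rmax z0 1). assert (HZ : 1 <= Z) by apply Rmax_r.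
  destruct (CP_of_derive (fun x => exp (l ^ 2 * (x - 1))) 0 ltac:(auto_derive; auto) e1 He1) as [d2 [Hd2 H2]].
  set (w := (l / (2 * Z)) ^ 2 / 2).
  assert (Hw : 0 < w) by (unfold w; apply Rdiv_lt_0_compat; [apply pow_lt; apply Rdiv_lt_0_compat; lra|lra]).
  exists (Rmin (/ 4) (Rmin w d2)). split. apply Rmin_pos. lra. apply Rmin_pos; auto.
  intros x Hx Hxd.
  assert (Hx4 : x < / 4) by (eapply Rlt_le_trans; [exact Hxd| apply Rmin_l]).
  assert (Hxw : x < w) by (eapply Rlt_le_trans; [exact Hxd| eapply Rle_trans; [apply Rmin_r| apply Rmin_l]]).
  assert (Hxd2 : x < d2) by (eapply Rlt_le_trans; [exact Hxd| eapply Rle_trans; [apply Rmin_r| apply Rmin_r]]).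
  set (z := l * (1 - 2 * x) / sqrt (2 * x)).
  assert (Hsq : 0 < sqrt (2 * x)) by (apply sqrt_lt_R0; lra).
  assert (Hsq2 : sqrt (2 * x) <= l / (2 * Z)).
  { rewrite <- (sqrt_pow2 (l / (2 * Z))) by (left; apply Rdiv_lt_0_compat; lra). apply sqrt_le_1_alt.
    unfold w in Hxw. lra. }
  assert (HzZ : Z <= z).
  { unfold z. apply Rmult_le_reg_r with (sqrt (2 * x)); auto. unfold Rdiv. rewrite Rmult_assoc, Rinv_l, Rmult_1_r by lra.
    apply Rle_trans with (Z * (l / (2 * Z))). apply Rmult_le_compat_l; lra.
    replace (Z * (l / (2 * Z))) with (l / 2) by (field; lra). nra. }
  assert (Hz0' : z0 <= z) by (generalize (Rmax_l z0 1); fold Z; lra).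
  specialize (Hz0 z Hz0'). assert (Hzp := Pinf_ge z). assert (Hz00 := Phi_mono 0 z ltac:(lra)).
  assert (HPz : Rabs (Phi z) <= Pb).
  { unfold Pb. apply Rabs_le. generalize (Rabs_pos (Phi 0)) (Rabs_pos Pinf) (Rle_abs Pinf) (Rle_abs (- Phi 0)).
    rewrite Rabs_Ropp. intros; lra. }
  specialize (H2 x ltac:(rewrite Rminus_0_r, Rabs_pos_eq; lra)).
  replace (l ^ 2 * (0 - 1)) with (- l ^ 2) in H2 by ring.
  unfold qD. fold z.
  set (E := exp (l ^ 2 * (x - 1))) in *. set (E0 := exp (- l ^ 2)) in *.
  assert (HE0 : 0 < E0 <= 1). { split. apply exp_pos. unfold E0. rewrite <- exp_0. apply exp_mono. lra. }
  replace (2 * l ^ 2 * E * Phi z - 2 * l ^ 2 * E0 * Pinf) with (2 * l ^ 2 * ((E - E0) * Phi z + E0 * (Phi z - Pinf))) by ring.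
  rewrite Rabs_mult, (Rabs_pos_eq (2 * l ^ 2)) by lra.
  assert (B1 : Rabs ((E - E0) * Phi z + E0 * (Phi z - Pinf)) <= e1 * Pb + e1).
  { eapply Rle_trans. apply Rabs_triang. rewrite !Rabs_mult. apply Rplus_le_compat.
    apply Rmult_le_compat; try apply Rabs_pos; lra.
    rewrite (Rabs_pos_eq E0) by lra. rewrite Rabs_left1 by lra.
    apply Rle_trans with (1 * e1). apply Rmult_le_compat; lra. lra. }
  apply Rle_lt_trans with (2 * l ^ 2 * (e1 * Pb + e1)). apply Rmult_le_compat_l; lra.
  unfold e1. replace (2 * l ^ 2 * (eps / (4 * l ^ 2 * (Pb + 1)) * Pb + eps / (4 * l ^ 2 * (Pb + 1)))) with (eps / 2)
    by (field; split; lra). lra.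
Qed.

Lemma Dt_cont l x0 : 0 < l -> 0 <= x0 -> forall eps, 0 < eps -> exists del, 0 < del /\
  forall x, 0 <= x -> Rabs (x - x0) < del -> Rabs (Dt l x - Dt l x0) < eps.
Proof.
  intros Hl Hx0 eps He. destruct Hx0 as [Hx0|Hx0].
  - destruct (qD_CP l x0 Hx0 eps He) as [d [Hd H]]. exists (Rmin d x0). split. apply Rmin_pos; auto.
    intros x Hx Hxd. assert (0 < x).
    { generalize (Rmin_r d x0) (Rabs_def2 _ _ (Rlt_le_trans _ _ _ Hxd (Rmin_r d x0))). lra. }
    rewrite !Dt_pos by auto. apply H. eapply Rlt_le_trans; [exact Hxd| apply Rmin_l].
  - subst x0. destruct (Dt_cont0 l Hl eps He) as [d [Hd H]]. exists d. split; auto.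
    intros x Hx Hxd. destruct Hx as [Hx|Hx].
    + rewrite Dt_pos by auto. apply H; auto. rewrite Rminus_0_r, Rabs_pos_eq in Hxd; lra.
    + subst. rewrite Rminus_diag, Rabs_R0; auto.
Qed.

Lemma Al_0 l : Al l 0 = 2 * l ^ 2 * exp (- l ^ 2).
Proof. unfold Al. destruct Rlt_dec; [lra|auto]. Qed.

Lemma S_pos l T S : 0 < l -> (forall t, 0 <= t <= T -> 0 <= S t) ->
  (forall t, 0 < t < T -> is_derive S t (Al l (S t))) -> forall v, 0 < v < T -> 0 < S v.
Proof.
  intros Hl HS HD v Hv. destruct (HS v ltac:(lra)) as [|H0]; auto. exfalso.
  specialize (HD v Hv). rewrite <- H0, Al_0 in HD. apply is_derive_Reals in HD.
  set (d := 2 * l ^ 2 * exp (- l ^ 2)) in HD.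
  assert (Hd : 0 < d) by (unfold d; apply Rmult_lt_0_compat; [apply Rmult_lt_0_compat; [lra|apply pow_lt; lra]|apply exp_pos]).
  destruct (HD (d / 2) ltac:(lra)) as [del Hdel].
  set (h := - Rmin (del / 2) (v / 2)).
  assert (Hh1 : h < 0) by (unfold h; generalize (Rmin_pos (del / 2) (v / 2) ltac:(generalize (cond_pos del); lra) ltac:(lra)); lra).
  assert (Hh2 : Rabs h < del).
  { unfold h. rewrite Rabs_Ropp, Rabs_pos_eq by (apply Rlt_le, Rmin_pos; [generalize (cond_pos del); lra|lra]).
    generalize (Rmin_l (del / 2) (v / 2)) (cond_pos del). lra. }
  specialize (Hdel h ltac:(lra) Hh2). rewrite <- H0 in Hdel. rewrite Rminus_0_r in Hdel.
  assert (Hvh : 0 <= v + h <= T) by (unfold h; generalize (Rmin_r (del / 2) (v / 2)) (Rmin_pos (del / 2) (v / 2) ltac:(generalize (cond_pos del); lra) ltac:(lra)); lra).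
  specialize (HS (v + h) Hvh).
  apply Rabs_def2 in Hdel. destruct Hdel as [_ Hdel].
  assert (S (v + h) / h > d / 2) by lra.
  assert (Hi : / h < 0) by (apply Rinv_lt_0_compat; lra).
  assert (S (v + h) / h <= 0) by (unfold Rdiv; nra).
  lra.
Qed.

Lemma coef_cont l T S : 0 < l -> (forall t, 0 <= t <= T -> 0 <= S t) ->
  (forall t, 0 <= t <= T -> continuity_pt S t) -> path_R T (fun v => Dt l (S v)).
Proof.
  intros Hl HS HC t Ht eps He.
  destruct (Dt_cont l (S t) Hl (HS t Ht) eps He) as [d [Hd H]].
  destruct (HC t Ht d Hd) as [d2 [Hd2 H2]].
  exists d2. split; auto. intros t' Ht' Htt.
  destruct (Req_dec t' t). subst. rewrite Rminus_diag, Rabs_R0; auto.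
  apply H. apply HS; auto. apply H2. split. split. exact I. auto. exact Htt.
Qed.

Lemma hcont_scal r T (c : R -> R) (f : R -> Hs r) : 0 < T -> path_R T c -> hcont r T f ->
  hcont r T (fun t => Hscal r (c t) (f t)).
Proof.
  intros HT Hc Hf.
  destruct (cont_bound (E := Hs_NM r) T f ltac:(lra) Hf) as [Mf [HMf HMfb]].
  destruct (cont_bound (E := R_NormedModule) T c ltac:(lra) Hc) as [Mc [HMc HMcb]].
  intros t Ht eps He.
  destruct (Hc t Ht (eps / (2 * (Mf + 1)))) as [d1 [Hd1 H1]]. apply Rdiv_lt_0_compat; lra.
  destruct (Hf t Ht (eps / (2 * (Mc + 1)))) as [d2 [Hd2 H2]]. apply Rdiv_lt_0_compat; lra.
  exists (Rmin d1 d2). split. apply Rmin_pos; auto. intros t' Ht' Htt.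
  specialize (H1 t' Ht' (Rlt_le_trans _ _ _ Htt (Rmin_l _ _))).
  specialize (H2 t' Ht' (Rlt_le_trans _ _ _ Htt (Rmin_r _ _))).
  assert (Bf : normH r (hv (f t')) <= Mf).
  { specialize (HMfb t'). rewrite clamp_id in HMfb by auto. exact HMfb. }
  assert (Bc : Rabs (c t) <= Mc).
  { specialize (HMcb t). rewrite clamp_id in HMcb by auto. exact HMcb. }
  simpl.
  replace (ssub (sscal (c t') (hv (f t'))) (sscal (c t) (hv (f t)))) with
    (sadd (sscal (c t' - c t) (hv (f t'))) (sscal (c t) (ssub (hv (f t')) (hv (f t))))).
  2: apply functional_extensionality; intros; unfold sadd, sscal, ssub; ring.
  eapply Rle_lt_trans. apply normH_triangle. apply in_H_scal, hp. apply in_H_scal, in_H_sub; apply hp.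
  rewrite !normH_scal.
  assert (T1 : Rabs (c t' - c t) * normH r (hv (f t')) <= eps / (2 * (Mf + 1)) * Mf).
  { apply Rmult_le_compat; try apply Rabs_pos; try apply normH_nn; lra. }
  assert (T2 : Rabs (c t) * normH r (ssub (hv (f t')) (hv (f t))) <= Mc * (eps / (2 * (Mc + 1)))).
  { apply Rmult_le_compat; try apply Rabs_pos; try apply normH_nn; lra. }
  assert (eps / (2 * (Mf + 1)) * Mf < eps / 2).
  { replace (eps / 2) with (eps / (2 * (Mf + 1)) * (Mf + 1)) by (field; lra).
    apply Rmult_lt_compat_l. apply Rdiv_lt_0_compat; lra. lra. }
  assert (Mc * (eps / (2 * (Mc + 1))) < eps / 2).
  { replace (eps / 2) with ((Mc + 1) * (eps / (2 * (Mc + 1)))) by (field; lra).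
    apply Rmult_lt_compat_r. apply Rdiv_lt_0_compat; lra. lra. }
  lra.
Qed.

Lemma hcont_lip r T (F0 : Hs r -> Hs r) L f : 0 <= L ->
  (forall z z', normH r (ssub (hv (F0 z)) (hv (F0 z'))) <= L * normH r (ssub (hv z) (hv z'))) ->
  hcont r T f -> hcont r T (fun t => F0 (f t)).
Proof. intros HL H Hf. apply (Gcont_of_lip r T F0 L HL H f Hf). Qed.


Definition Fh s lam gradPsi (HFin : forall x, in_H s x -> in_H s (Fmap lam gradPsi x)) (z : Hs s) : Hs s :=
  mkH (Fmap lam gradPsi (hv z)) (HFin _ (hp z)).

Definition G1 s lam gradPsi HFin (c : R -> R) (v : R) (z : Hs s) : Hs s :=
  Hscal s (c v) (Fh s lam gradPsi HFin z).

Lemma G1_lip s lam gradPsi HFin c T LF Cb : 0 <= LF ->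
  (forall x y, in_H s x -> in_H s y -> normH s (ssub (Fmap lam gradPsi x) (Fmap lam gradPsi y)) <= LF * normH s (ssub x y)) ->
  (forall v, 0 <= v <= T -> Rabs (c v) <= Cb) ->
  Glip s T (G1 s lam gradPsi HFin c) (Cb * LF + 1).
Proof.
  intros HLF HF Hc v z z' Hv. unfold G1, Fh. simpl.
  replace (ssub (sscal (c v) (Fmap lam gradPsi (hv z))) (sscal (c v) (Fmap lam gradPsi (hv z')))) with
    (sscal (c v) (ssub (Fmap lam gradPsi (hv z)) (Fmap lam gradPsi (hv z')))).
  2: apply functional_extensionality; intros; unfold sscal, ssub; ring.
  rewrite normH_scal. specialize (HF _ _ (hp z) (hp z')). specialize (Hc v Hv).
  assert (0 <= normH s (ssub (hv z) (hv z'))) by apply normH_nn.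
  assert (Rabs (c v) * normH s (ssub (Fmap lam gradPsi (hv z)) (Fmap lam gradPsi (hv z'))) <= Cb * (LF * normH s (ssub (hv z) (hv z')))).
  { apply Rmult_le_compat; auto; try apply Rabs_pos; apply normH_nn. }
  nra.
Qed.

Lemma G1_cont s lam gradPsi HFin c T LF : 0 < T -> 0 <= LF ->
  (forall x y, in_H s x -> in_H s y -> normH s (ssub (Fmap lam gradPsi x) (Fmap lam gradPsi y)) <= LF * normH s (ssub x y)) ->
  path_R T c -> Gcont s T (G1 s lam gradPsi HFin c).
Proof.
  intros HT HLF HF Hc z Hz. unfold G1. apply hcont_scal; auto.
  apply (hcont_lip s T (Fh s lam gradPsi HFin) LF); auto.
  intros w w'. apply HF; apply hp.
Qed.

Definition embH s T (x : R -> seqR) (Hx : forall t, 0 <= t <= T -> in_H s (x t)) (HT : 0 <= T) (t : R) : Hs s :=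
  mkH (x (clamp T t)) (Hx _ (clamp_in T t HT)).

Lemma embH_cont (s T : R) (x : R -> seqR) (Hx : forall t, 0 <= t <= T -> in_H s (x t)) (HT : 0 <= T) : (forall t, 0 <= t <= T -> forall eps, 0 < eps -> exists del, 0 < del /\ forall t', 0 <= t' <= T -> Rabs (t' - t) < del -> normH s (ssub (x t') (x t)) < eps) ->
  hcont s T (embH s T x Hx HT).
Proof.
  intros H t Ht eps He. destruct (H t Ht eps He) as [d [Hd H']]. exists d; split; auto.
  intros t' Ht' Htt. unfold embH; simpl. rewrite !clamp_id by auto. auto.
Qed.

Lemma sol1_hsol s lam gradPsi HFin l S T c LF x0 eta x (Hx0 : in_H s x0) Heta Hx (HT : 0 < T) :
  0 <= LF ->
  (forall x y, in_H s x -> in_H s y -> normH s (ssub (Fmap lam gradPsi x) (Fmap lam gradPsi y)) <= LF * normH s (ssub x y)) ->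
  path_R T c -> (forall v, 0 < v < T -> c v = Dl l (S v)) ->
  is_sol1 s lam gradPsi l S T x0 eta x ->
  hsol s T (G1 s lam gradPsi HFin c) (mkH x0 Hx0) (embH s T eta Heta (Rlt_le _ _ HT)) (embH s T x Hx (Rlt_le _ _ HT)).
Proof.
  intros HLF HF Hc Hcd [[_ Hxc] HI].
  set (xh := embH s T x Hx (Rlt_le _ _ HT)).
  assert (Hxh : hcont s T xh) by (apply embH_cont; auto).
  split; auto. intros t Ht.
  assert (HGc := G1_cont s lam gradPsi HFin c T LF HT HLF HF Hc).
  assert (Hex : ex_RInt (V := Hs_CNM s) (fun v => G1 s lam gradPsi HFin c (clamp T v) (xh (clamp T v))) 0 t).
  { apply (ex_RInt_clamp (E := Hs_CNM s) T (fun v => G1 s lam gradPsi HFin c v (xh v))). lra. apply HGc; auto. }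
  set (I := RInt (V := Hs_CNM s) (fun v => G1 s lam gradPsi HFin c (clamp T v) (xh (clamp T v))) 0 t).
  assert (HIc := RInt_correct _ _ _ Hex). fold I in HIc.
  replace (Hsub s (Hsub s (xh t) (mkH x0 Hx0)) (embH s T eta Heta (Rlt_le _ _ HT) t)) with I.
  - apply (is_RInt_ext (V := Hs_NM s) (fun v => G1 s lam gradPsi HFin c (clamp T v) (xh (clamp T v)))); auto.
    intros v Hv. rewrite Rmin_left, Rmax_right in Hv by lra. rewrite clamp_id by lra. auto.
  - apply Hs_eq. apply functional_extensionality. intros j.
    assert (Hj := is_RInt_coord s j _ _ _ _ HIc).
    unfold xh, embH. simpl. unfold ssub. rewrite !clamp_id by auto.
    eapply is_RInt_R_unique. exact Hj.
    apply (is_RInt_ext (V := R_NormedModule) (fun v => Fmap lam gradPsi (x v) j * Dl l (S v))); auto.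
    intros v Hv. rewrite Rmin_left, Rmax_right in Hv by lra. unfold xh, embH, G1, Fh. simpl. unfold sscal.
    rewrite (clamp_id T v) by lra. rewrite (clamp_id T v) by lra. rewrite Hcd by lra. ring.
Qed.

Lemma hsol_sol1 s lam gradPsi HFin l S T c x0 eta (Hx0 : in_H s x0) Heta (HT : 0 < T) xh :
  (forall v, 0 < v < T -> c v = Dl l (S v)) ->
  hsol s T (G1 s lam gradPsi HFin c) (mkH x0 Hx0) (embH s T eta Heta (Rlt_le _ _ HT)) xh ->
  is_sol1 s lam gradPsi l S T x0 eta (fun t => hv (xh t)).
Proof.
  intros Hcd [Hxc HI]. split. split. intros; apply hp. exact Hxc.
  intros t Ht j. generalize (is_RInt_coord s j _ _ _ _ (HI t Ht)). intros Hj.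
  unfold embH in Hj. simpl in Hj. unfold ssub in Hj. rewrite clamp_id in Hj by auto.
  apply (is_RInt_ext (V := R_NormedModule) (fun v => hv (G1 s lam gradPsi HFin c v (xh v)) j)); auto.
  intros v Hv. rewrite Rmin_left, Rmax_right in Hv by lra. unfold G1, Fh. simpl. unfold sscal.
  rewrite Hcd by lra. ring.
Qed.

Lemma J1_thm s lam gradPsi l S T c LF (HT : 0 < T) (HLF : 0 <= LF)
  (HFin : forall x, in_H s x -> in_H s (Fmap lam gradPsi x))
  (HF : forall x y, in_H s x -> in_H s y -> normH s (ssub (Fmap lam gradPsi x) (Fmap lam gradPsi y)) <= LF * normH s (ssub x y))
  (Hc : path_R T c) (Hcd : forall v, 0 < v < T -> c v = Dl l (S v)) :
  ((forall x0 eta, in_H s x0 -> path_H s T eta ->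
      (exists x, is_sol1 s lam gradPsi l S T x0 eta x) /\
      (forall x x', is_sol1 s lam gradPsi l S T x0 eta x ->
                    is_sol1 s lam gradPsi l S T x0 eta x' ->
                    forall t, 0 <= t <= T -> forall j, x t j = x' t j)) /\
   (forall x0 eta, in_H s x0 -> path_H s T eta ->
      forall eps, 0 < eps -> exists del, 0 < del /\
      forall x0' eta', in_H s x0' -> path_H s T eta' ->
        normH s (ssub x0 x0') < del ->
        (forall t, 0 <= t <= T -> normH s (ssub (eta t) (eta' t)) < del) ->
        forall x x', is_sol1 s lam gradPsi l S T x0 eta x ->
                     is_sol1 s lam gradPsi l S T x0' eta' x' ->
        forall t, 0 <= t <= T -> normH s (ssub (x t) (x' t)) <= eps)).
Proof.
  destruct (cont_bound (E := R_NormedModule) T c ltac:(lra) Hc) as [Cb [HCb HCbb]].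
  assert (Hcb : forall v, 0 <= v <= T -> Rabs (c v) <= Cb).
  { intros v Hv. specialize (HCbb v). rewrite clamp_id in HCbb by auto. exact HCbb. }
  set (L := Cb * LF + 1). assert (HL : 0 < L) by (unfold L; nra).
  assert (HGL := G1_lip s lam gradPsi HFin c T LF Cb HLF HF Hcb). fold L in HGL.
  assert (HGc := G1_cont s lam gradPsi HFin c T LF HT HLF HF Hc).
  assert (HTl : 0 <= T) by lra.
  split.
  - intros x0 eta Hx0 [Heta Hetac]. split.
    + destruct (hsol_exists s T (G1 s lam gradPsi HFin c) L (mkH x0 Hx0) (embH s T eta Heta (Rlt_le _ _ HT)) HT HL HGL HGc)
        as [xh Hxh].
      { apply embH_cont; auto. }
      exists (fun t => hv (xh t)). eapply hsol_sol1; eauto.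
    + intros x x' Hs1 Hs2 t Ht j.
      assert (Hx := proj1 (proj1 Hs1)). assert (Hx' := proj1 (proj1 Hs2)).
      assert (H1 := sol1_hsol s lam gradPsi HFin l S T c LF x0 eta x Hx0 Heta Hx HT HLF HF Hc Hcd Hs1).
      assert (H2 := sol1_hsol s lam gradPsi HFin l S T c LF x0 eta x' Hx0 Heta Hx' HT HLF HF Hc Hcd Hs2).
      assert (Hd := hsol_dep s T _ L _ _ _ _ _ _ 0 HT HL ltac:(lra) HGL H1 H2).
      specialize (Hd ltac:(intros; rewrite normH_ssub_self; lra) t Ht).
      simpl in Hd. rewrite normH_ssub_self, Rplus_0_l, Rmult_0_l in Hd. rewrite clamp_id in Hd by auto.
      assert (Hz : normH s (ssub (x t) (x' t)) = 0) by (apply Rle_antisym; auto; apply normH_nn).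
      generalize (normH_zero s _ (in_H_sub s _ _ (Hx t Ht) (Hx' t Ht)) Hz j). unfold ssub. lra.
  - intros x0 eta Hx0 [Heta Hetac] eps He.
    assert (HE : 0 < exp (L * T)) by apply exp_pos.
    exists (eps / (2 * exp (L * T))). split. apply Rdiv_lt_0_compat; lra.
    intros x0' eta' Hx0' [Heta' Hetac'] Hd0 Hde x x' Hs1 Hs2 t Ht.
    assert (Hx := proj1 (proj1 Hs1)). assert (Hx' := proj1 (proj1 Hs2)).
    assert (H1 := sol1_hsol s lam gradPsi HFin l S T c LF x0 eta x Hx0 Heta Hx HT HLF HF Hc Hcd Hs1).
    assert (H2 := sol1_hsol s lam gradPsi HFin l S T c LF x0' eta' x' Hx0' Heta' Hx' HT HLF HF Hc Hcd Hs2).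
    set (del := eps / (2 * exp (L * T))) in *.
    assert (Hd := hsol_dep s T _ L _ _ _ _ _ _ del HT HL ltac:(unfold del; apply Rlt_le, Rdiv_lt_0_compat; lra) HGL H1 H2).
    specialize (Hd ltac:(intros t' Ht'; simpl; rewrite !clamp_id by auto; left; apply Hde; auto) t Ht).
    simpl in Hd. rewrite !clamp_id in Hd by auto.
    eapply Rle_trans. exact Hd.
    assert (exp (L * t) <= exp (L * T)) by (apply exp_mono; nra).
    apply Rle_trans with ((del + del) * exp (L * T)).
    { apply Rmult_le_compat; try lra. generalize (normH_nn s (ssub x0 x0')); lra. left; apply exp_pos. }
    unfold del. right. field. lra.
Qed.

Theorem theorem4p6
  (kappa s : R) (lam : seqR)
  (Psi : seqR -> R) (gradPsi : seqR -> seqR) (hessPsi : seqR -> seqR -> seqR)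
  (l T a : R) (S : R -> R) (At : R -> R) :
  (* (A1) lam_j ~ j^{-kappa}, kappa > 1/2 *)
  1 / 2 < kappa ->
  (exists c1 c2, 0 < c1 /\ 0 < c2 /\ forall j : nat,
      c1 * Rpower (INR j + 1) (- kappa) <= lam j <= c2 * Rpower (INR j + 1) (- kappa)) ->
  (* (A2) s in [0, kappa - 1/2) *)
  0 <= s -> s < kappa - 1 / 2 ->
  (* (A3) 0 <= Psi x <~ 1 + ||x||_s^2 *)
  (exists K, forall x, in_H s x -> 0 <= Psi x <= K * (1 + (normH s x) ^ 2)) ->
  (* gradPsi is the Frechet derivative of Psi on H^s, valued in H^{-s} *)
  (forall x, in_H s x -> in_H (- s) (gradPsi x)) ->
  (forall x, in_H s x -> forall eps, 0 < eps -> exists del, 0 < del /\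
     forall h, in_H s h -> normH s h < del ->
       Rabs (Psi (sadd x h) - Psi x - pairing (gradPsi x) h) <= eps * normH s h) ->
  (* hessPsi x is a linear map H^s -> H^{-s}, the Frechet derivative of gradPsi *)
  (forall x h, in_H s x -> in_H s h -> in_H (- s) (hessPsi x h)) ->
  (forall x h1 h2 c, in_H s x -> in_H s h1 -> in_H s h2 -> forall j,
     hessPsi x (fun i => c * h1 i + h2 i) j = c * hessPsi x h1 j + hessPsi x h2 j) ->
  (forall x, in_H s x -> forall eps, 0 < eps -> exists del, 0 < del /\
     forall h, in_H s h -> normH s h < del ->
       normH (- s) (ssub (ssub (gradPsi (sadd x h)) (gradPsi x)) (hessPsi x h))
         <= eps * normH s h) ->
  (* (A4) ||grad Psi(x)||_{-s} <~ 1 + ||x||_s,  ||d^2 Psi(x)||_{L(H^s,H^{-s})} <~ 1 *)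
  (exists K, forall x, in_H s x -> normH (- s) (gradPsi x) <= K * (1 + normH s x)) ->
  (exists K, forall x h, in_H s x -> in_H s h ->
     normH (- s) (hessPsi x h) <= K * normH s h) ->
  (* parameters *)
  0 < l -> 0 < T -> 0 <= a ->
  (* S solves dS/dt = A_l(S) on [0,T] with S(0) in R_+ *)
  0 <= S 0 ->
  (forall t, 0 <= t <= T -> 0 <= S t) ->
  (forall t, 0 <= t <= T -> continuity_pt S t) ->
  (forall t, 0 < t < T -> is_derive S t (Al l (S t))) ->
  (* tildeA: extension of A_l *)
  (forall x, 0 <= x -> At x = Al l x) ->
  (forall x, x <= - 1 / 2 -> At x = 1) ->
  (forall (n : nat) x, - 1 / 2 < x < 0 -> ex_derive_n At n x) ->
  (forall x, x < 1 -> 0 < At x) ->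
  (exists C, forall x y, Rabs (At x - At y) <= C * (1 + Rabs x) * Rabs (x - y)) ->
  (* CONCLUSION: J1 : H^s x C([0,T];H^s) -> C([0,T];H^s) well defined and continuous *)
  ((forall x0 eta, in_H s x0 -> path_H s T eta ->
      (exists x, is_sol1 s lam gradPsi l S T x0 eta x) /\
      (forall x x', is_sol1 s lam gradPsi l S T x0 eta x ->
                    is_sol1 s lam gradPsi l S T x0 eta x' ->
                    forall t, 0 <= t <= T -> forall j, x t j = x' t j)) /\
   (forall x0 eta, in_H s x0 -> path_H s T eta ->
      forall eps, 0 < eps -> exists del, 0 < del /\
      forall x0' eta', in_H s x0' -> path_H s T eta' ->
        normH s (ssub x0 x0') < del ->
        (forall t, 0 <= t <= T -> normH s (ssub (eta t) (eta' t)) < del) ->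
        forall x x', is_sol1 s lam gradPsi l S T x0 eta x ->
                     is_sol1 s lam gradPsi l S T x0' eta' x' ->
        forall t, 0 <= t <= T -> normH s (ssub (x t) (x' t)) <= eps)) /\
  (* J2 : R_+ x C([0,T];R) -> C([0,T];R) well defined and continuous *)
  ((forall S0 w, 0 <= S0 -> path_R T w ->
      (exists Sg, is_sol2 At a T S0 w Sg) /\
      (forall Sg Sg', is_sol2 At a T S0 w Sg -> is_sol2 At a T S0 w Sg' ->
                      forall t, 0 <= t <= T -> Sg t = Sg' t)) /\
   (forall S0 w, 0 <= S0 -> path_R T w ->
      forall eps, 0 < eps -> exists del, 0 < del /\
      forall S0' w', 0 <= S0' -> path_R T w' ->
        Rabs (S0 - S0') < del ->
        (forall t, 0 <= t <= T -> Rabs (w t - w' t) < del) ->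
        forall Sg Sg', is_sol2 At a T S0 w Sg -> is_sol2 At a T S0' w' Sg' ->
        forall t, 0 <= t <= T -> Rabs (Sg t - Sg' t) <= eps)).
Proof.
  intros Hk [c1 [c2 [Hc1 [Hc2 Hlam]]]] Hs0 Hsk _ Hgin _ Hhin _ HFr _ [K2 HK2] Hl HT Ha _ HS0 HSc HSd HAt _ _ _ [C HC].
  split.
  -
    assert (Hlam' : forall j, 0 <= lam j <= c2 * Rpower (INR j + 1) (- kappa)).
    { intros j. destruct (Hlam j) as [H1 H2]. split; auto.
      apply Rle_trans with (c1 * Rpower (INR j + 1) (- kappa)); auto.
      apply Rmult_le_pos. lra. unfold Rpower. left; apply exp_pos. }
    assert (HCop := Cop_bound s kappa lam c2 Hs0 ltac:(lra) Hc2 Hlam').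
    assert (Hgl := grad_lip s gradPsi hessPsi K2 Hgin Hhin HFr HK2).
    assert (HFin : forall x, in_H s x -> in_H s (Fmap lam gradPsi x)).
    { intros x Hx. replace (Fmap lam gradPsi x) with (ssub (sopp x) (Cop lam (gradPsi x))).
      apply in_H_sub. apply in_H_opp; auto. apply HCop. apply Hgin; auto.
      apply functional_extensionality; intros j; unfold Fmap, ssub, sopp; ring. }
    set (LF := 1 + c2 ^ 2 * (Rabs K2 + 1)).
    assert (HLF : 0 <= LF) by (unfold LF; generalize (Rabs_pos K2); intros; nra).
    assert (HF : forall x y, in_H s x -> in_H s y ->
      normH s (ssub (Fmap lam gradPsi x) (Fmap lam gradPsi y)) <= LF * normH s (ssub x y)).
    { intros x y Hx Hy.
      replace (ssub (Fmap lam gradPsi x) (Fmap lam gradPsi y)) with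
        (ssub (sopp (ssub x y)) (Cop lam (ssub (gradPsi x) (gradPsi y)))).
      2: apply functional_extensionality; intros j; unfold Fmap, ssub, sopp, Cop; ring.
      assert (Hd : in_H (- s) (ssub (gradPsi x) (gradPsi y))) by (apply in_H_sub; apply Hgin; auto).
      destruct (HCop _ Hd) as [Hin Hb].
      replace (ssub (sopp (ssub x y)) (Cop lam (ssub (gradPsi x) (gradPsi y)))) with
        (sadd (sscal (-1) (ssub x y)) (sscal (-1) (Cop lam (ssub (gradPsi x) (gradPsi y))))).
      2: apply functional_extensionality; intros j; unfold sadd, sscal, ssub, sopp; ring.
      eapply Rle_trans. apply normH_triangle. apply in_H_scal, in_H_sub; auto. apply in_H_scal; auto.
      rewrite !normH_scal. replace (Rabs (-1)) with 1 by (rewrite Rabs_left; lra).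
      specialize (Hgl x y Hx Hy).
      assert (0 <= c2 ^ 2) by apply pow2_ge_0.
      assert (c2 ^ 2 * normH (- s) (ssub (gradPsi x) (gradPsi y)) <= c2 ^ 2 * ((Rabs K2 + 1) * normH s (ssub x y))).
      { apply Rmult_le_compat_l; auto. }
      unfold LF. nra. }
    apply (J1_thm s lam gradPsi l S T (fun v => Dt l (S v)) LF HT HLF HFin HF).
    + apply coef_cont; auto.
    + intros v Hv. assert (Hp := S_pos l T S Hl HS0 HSd v Hv). rewrite Dt_pos, Dl_pos; auto.
  -
    apply (J2_thm At C a T HT Ha HC).
Qed.
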